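(* Let $N\geq 1$ be an integer. Then for all $0<t<\pi/2$, \[ \lambda_N t^{2N+2}<\left(\frac{t}{\sin t}\right)^2+\frac{t}{\tan t}-\left(2+\sum_{j=1}^{N-1}\frac{j\cdot 2^{2j+3}|B_{2j+2}|}{(2j+2)!}t^{2j+2}\right)<\mu_N t^{2N+2}, \] where \[ \lambda_N=\frac{N\cdot 2^{2N+3}|B_{2N+2}|}{(2N+2)!},\qquad \mu_N=\frac{64N}{\pi^{2N+2}}\sum_{k=1}^{\infty}\frac{1}{k^{2N-2}(4k^2-1)^2}-\frac{16(N-1)}{\pi^{2N+2}}\sum_{k=1}^{\infty}\frac{1}{k^{2N}(4k^2-1)^2}, \] and these constants are best possible (i.e. $\lambda_N$ is the largest and $\mu_N$ the smallest constant for which the respective inequality holds on $(0,\pi/2)$).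
   Context: The Bernoulli numbers $B_n$ are defined by $\frac{t}{e^t-1}=\sum_{n=0}^\infty B_n\frac{t^n}{n!}$ for $|t|<2\pi$. An empty sum is understood to be zero. *)

(* Defs.v *)
From Stdlib Require Import Reals Arith Factorial.
Open Scope R_scope.

(* B is a sequence of Bernoulli numbers: t/(e^t-1) = sum_n B_n t^n/n! for 0<|t|<2pi
   (at t = 0 the left side is understood as its limit 1; the coefficients are
   already uniquely determined by the punctured disc). *)
Definition is_bernoulli (B : nat -> R) : Prop :=
  forall t : R, t <> 0 -> Rabs t < 2 * PI ->
    infinite_sum (fun n => B n * t ^ n / INR (fact n)) (t / (exp t - 1)).

Fixpoint sum1 (c : nat -> R) (n : nat) : R :=
  match n with
  | O => 0
  | S m => sum1 c m + c (S m)
  end.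

Definition coefB (B : nat -> R) (j : nat) : R :=
  INR j * 2 ^ (2 * j + 3)%nat * Rabs (B (2 * j + 2)%nat) / INR (fact (2 * j + 2)%nat).

Definition Fdiff (B : nat -> R) (N : nat) (t : R) : R :=
  (t / sin t) ^ 2 + t / tan t
  - (2 + sum1 (fun j => coefB B j * t ^ (2 * j + 2)%nat) (N - 1)).

Definition lambdaN (B : nat -> R) (N : nat) : R := coefB B N.

(* mu_N in terms of the values S1 = sum_{k>=1} 1/(k^(2N-2)(4k^2-1)^2),
   S2 = sum_{k>=1} 1/(k^(2N)(4k^2-1)^2). *)
Definition muN (N : nat) (S1 S2 : R) : R :=
  64 * INR N / PI ^ (2 * N + 2)%nat * S1 - 16 * (INR N - 1) / PI ^ (2 * N + 2)%nat * S2.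

Definition series_term (p : nat) (k : nat) : R :=
  1 / (INR (k + 1)%nat ^ p * (4 * INR (k + 1)%nat ^ 2 - 1) ^ 2).

(* Main.v *)
Require Import Defs.
From Stdlib Require Import Reals.
Open Scope R_scope.
From Stdlib Require Import Lra Lia Psatz Arith Factorial.
From Coquelicot Require Import Coquelicot.
Open Scope R_scope.

Lemma sumf_shift (f : nat -> R) n :
  sum_f_R0 f (S n) = f 0%nat + sum_f_R0 (fun i => f (S i)) n.
Proof.
  induction n as [|n IH].
  - simpl. ring.
  - change (sum_f_R0 f (S (S n))) with (sum_f_R0 f (S n) + f (S (S n))).
    rewrite IH. simpl. ring.
Qed.

Lemma sumf_split (f : nat -> R) n m :
  sum_f_R0 f (n + S m) = sum_f_R0 f n + sum_f_R0 (fun j => f (S n + j)%nat) m.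
Proof.
  induction m as [|m IH].
  - rewrite Nat.add_1_r. simpl. rewrite Nat.add_0_r. reflexivity.
  - replace (n + S (S m))%nat with (S (n + S m)) by lia.
    simpl sum_f_R0 at 1. rewrite IH. simpl. replace (S (n + S m)) with (S (n + S m))%nat by lia.
    replace (n + S m)%nat with (S n + m)%nat by lia. ring.
Qed.

Lemma sumf_plus (f g : nat -> R) n :
  sum_f_R0 (fun j => f j + g j) n = sum_f_R0 f n + sum_f_R0 g n.
Proof. induction n; simpl; [ring| rewrite IHn; ring]. Qed.

Lemma sumf_scal (f : nat -> R) c n :
  sum_f_R0 (fun j => c * f j) n = c * sum_f_R0 f n.
Proof. induction n; simpl; [ring| rewrite IHn; ring]. Qed.

Lemma sum1_first (c : nat -> R) K :
  sum1 c (S K) = c 1%nat + sum1 (fun j => c (S j)) K.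
Proof.
  induction K as [|K IH].
  - simpl. ring.
  - change (sum1 c (S (S K))) with (sum1 c (S K) + c (S (S K))).
    rewrite IH. simpl. ring.
Qed.

Lemma sum1_sumf (f : nat -> R) n : sum1 f (S n) = sum_f_R0 (fun i => f (S i)) n.
Proof. induction n; simpl; [ring | rewrite <- IHn; simpl; ring]. Qed.

Lemma sum1_ext (f g : nat -> R) n :
  (forall j, (1 <= j <= n)%nat -> f j = g j) -> sum1 f n = sum1 g n.
Proof.
  induction n; intros H; simpl; [reflexivity|].
  rewrite IHn by (intros; apply H; lia). rewrite H by lia. reflexivity.
Qed.

Lemma sum1_plus (f g : nat -> R) n :
  sum1 (fun j => f j + g j) n = sum1 f n + sum1 g n.
Proof. induction n; simpl; [ring| rewrite IHn; ring]. Qed.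

Lemma sum1_scal (f : nat -> R) c n :
  sum1 (fun j => c * f j) n = c * sum1 f n.
Proof. induction n; simpl; [ring| rewrite IHn; ring]. Qed.

Lemma sumf_fold (g : nat -> R) K :
  sum_f_R0 g (2 * K + 1) =
  g 0%nat + g (S K) + sum1 (fun j => g j + g (2 * K + 2 - j)%nat) K.
Proof.
  revert g. induction K as [|K IH]; intros g.
  - simpl. ring.
  - replace (2 * S K + 1)%nat with (S (S (2 * K + 1))) by lia.
    rewrite sumf_shift.
    change (sum_f_R0 (fun i : nat => g (S i)) (S (2 * K + 1))) with
      (sum_f_R0 (fun i : nat => g (S i)) (2 * K + 1) + g (S (S (2 * K + 1)))).
    rewrite (IH (fun i => g (S i))).
    rewrite sum1_first.
    rewrite (sum1_ext (fun j => g (S j) + g (2 * S K + 2 - S j)%nat)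
                      (fun j => g (S j) + g (S (2 * K + 2 - j)))).
    2:{ intros j Hj. f_equal. f_equal. lia. }
    replace (2 * S K + 2 - 1)%nat with (S (S (2 * K + 1))) by lia.
    ring.
Qed.

Lemma inf_sum_is (a : nat -> R) l : infinite_sum a l -> is_series a l.
Proof. intro H; apply is_series_Reals; exact H. Qed.
Lemma is_inf_sum (a : nat -> R) l : is_series a l -> infinite_sum a l.
Proof. intro H; apply is_series_Reals; exact H. Qed.

Lemma inf_sum_plus a b la lb :
  infinite_sum a la -> infinite_sum b lb -> infinite_sum (fun n => a n + b n) (la + lb).
Proof.
  intros Ha Hb. apply is_inf_sum. apply inf_sum_is in Ha. apply inf_sum_is in Hb.
  apply (is_series_plus _ _ _ _ Ha Hb).
Qed.

Lemma inf_sum_scal a la c :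
  infinite_sum a la -> infinite_sum (fun n => c * a n) (c * la).
Proof.
  intros Ha. apply is_inf_sum. apply inf_sum_is in Ha.
  apply (is_series_scal_l c _ _ Ha).
Qed.

Lemma inf_sum_opp a la :
  infinite_sum a la -> infinite_sum (fun n => - a n) (- la).
Proof.
  intros Ha. apply is_inf_sum. apply inf_sum_is in Ha.
  apply (is_series_opp _ _ Ha).
Qed.

Lemma inf_sum_minus a b la lb :
  infinite_sum a la -> infinite_sum b lb -> infinite_sum (fun n => a n - b n) (la - lb).
Proof.
  intros Ha Hb. apply (inf_sum_plus _ _ _ _ Ha (inf_sum_opp _ _ Hb)).
Qed.

Lemma inf_sum_ext a b l : (forall n, a n = b n) -> infinite_sum a l -> infinite_sum b l.
Proof.
  intros H Ha. apply is_inf_sum. apply inf_sum_is in Ha.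
  apply (is_series_ext _ _ _ H Ha).
Qed.

Lemma inf_sum_unique a l1 l2 : infinite_sum a l1 -> infinite_sum a l2 -> l1 = l2.
Proof. intros H1 H2. apply (uniqueness_sum a); assumption. Qed.

Lemma inf_sum_le a b la lb :
  (forall n, a n <= b n) -> infinite_sum a la -> infinite_sum b lb -> la <= lb.
Proof.
  intros H Ha Hb. unfold infinite_sum in *.
  apply (@Rle_cv_lim (fun n => sum_f_R0 a n) (fun n => sum_f_R0 b n) la lb).
  - intro n. induction n; simpl; [apply H| specialize (H (S n)); lra].
  - intros e He. destruct (Ha e He) as [N HN]. exists N. intros n Hn. apply HN; lia.
  - intros e He. destruct (Hb e He) as [N HN]. exists N. intros n Hn. apply HN; lia.
Qed.

Lemma inf_sum_ge_first a la :
  (forall n, 0 <= a n) -> infinite_sum a la -> a 0%nat <= la.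
Proof.
  intros H Ha. unfold infinite_sum in *.
  apply (@Rle_cv_lim (fun n => a 0%nat) (fun n => sum_f_R0 a n) _ la).
  - intro n. induction n; simpl; [lra| specialize (H (S n)); lra].
  - intros e He. exists 0%nat. intros. unfold Rdist. rewrite Rminus_eq_0, Rabs_R0. lra.
  - intros e He. destruct (Ha e He) as [N HN]. exists N. intros n Hn. apply HN; lia.
Qed.

Lemma inf_sum_lt a b la lb :
  (forall n, a n <= b n) -> a 0%nat < b 0%nat ->
  infinite_sum a la -> infinite_sum b lb -> la < lb.
Proof.
  intros H H0 Ha Hb.
  pose proof (inf_sum_minus _ _ _ _ Hb Ha) as Hd.
  pose proof (inf_sum_ge_first (fun n => b n - a n) _ (fun n => ltac:(specialize (H n); lra)) Hd).
  simpl in H1. lra.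
Qed.

Lemma inf_sum_nonneg a la : (forall n, 0 <= a n) -> infinite_sum a la -> 0 <= la.
Proof.
  intros H Ha. pose proof (inf_sum_ge_first a la H Ha). specialize (H 0%nat). lra.
Qed.

Lemma inf_sum_sum1 (f : nat -> nat -> R) (l : nat -> R) n :
  (forall j, (1 <= j <= n)%nat -> infinite_sum (f j) (l j)) ->
  infinite_sum (fun k => sum1 (fun j => f j k) n) (sum1 l n).
Proof.
  induction n as [|n IH]; intros H.
  - simpl. apply (inf_sum_ext (fun _ => 0)); [reflexivity|].
    intros e He. exists 0%nat. intros m _. unfold Rdist.
    assert (sum_f_R0 (fun _ => 0) m = 0) by (induction m; simpl; lra).
    rewrite H0. rewrite Rminus_0_r, Rabs_R0. lra.
  - simpl. apply inf_sum_plus; [apply IH; intros; apply H; lia| apply H; lia].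
Qed.

Lemma tele_sum : infinite_sum (fun i => / (INR (S i) * INR (S (S i)))) 1.
Proof.
  assert (Hp : forall n, sum_f_R0 (fun i => / (INR (S i) * INR (S (S i)))) n = 1 - / INR (S (S n))).
  { induction n.
    - simpl. field.
    - change (sum_f_R0 (fun i => / (INR (S i) * INR (S (S i)))) (S n)) with
        (sum_f_R0 (fun i => / (INR (S i) * INR (S (S i)))) n + / (INR (S (S n)) * INR (S (S (S n))))).
      rewrite IHn. rewrite !S_INR.
      assert (0 <= INR n) by apply pos_INR. field. lra. }
  intros e He. destruct (archimed_cor1 e He) as [N [HN1 HN2]].
  exists N. intros n Hn. unfold Rdist. rewrite Hp.
  assert (0 < INR (S (S n))) by (apply lt_0_INR; lia).
  assert (INR N <= INR (S (S n))) by (apply le_INR; lia).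
  rewrite Rabs_left1.
  2:{ assert (0 < / INR (S (S n))) by (apply Rinv_0_lt_compat; lra). lra. }
  assert (/ INR (S (S n)) <= / INR N).
  { apply Rinv_le_contravar; [apply lt_0_INR; lia| lra]. }
  lra.
Qed.

Lemma inv_sq_ex : ex_series (fun i => / INR (S i) ^ 2).
Proof.
  apply (@ex_series_le R_AbsRing R_CompleteNormedModule _ (fun i => 2 * / (INR (S i) * INR (S (S i))))).
  - intro n. change (Rabs (/ INR (S n) ^ 2) <= 2 * / (INR (S n) * INR (S (S n)))).
    assert (1 <= INR (S n)) by (apply (le_INR 1); lia).
    assert (H2 : INR (S (S n)) = INR (S n) + 1) by (rewrite (S_INR (S n)); ring).
    rewrite H2. set (y := INR (S n)) in *. simpl pow.

    rewrite Rabs_pos_eq.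
    2:{ apply Rlt_le, Rinv_0_lt_compat. nra. }
    apply Rmult_le_reg_l with (y * y * (y + 1)). { nra. }
    field_simplify; try lra.
  - exists (2 * 1). apply inf_sum_is. apply (inf_sum_scal _ _ 2 tele_sum).
Qed.

Lemma lim_le_ev (a : nat -> R) l b m0 :
  Un_cv a l -> (forall m, (m >= m0)%nat -> a m <= b) -> l <= b.
Proof.
  intros Ha Hb. destruct (Rle_or_lt l b) as [|H]; [assumption|].
  destruct (Ha (l - b)) as [N HN]; [lra|].
  specialize (HN (max N m0) ltac:(lia)). specialize (Hb (max N m0) ltac:(lia)).
  unfold Rdist in HN. apply Rabs_def2 in HN. lra.
Qed.

Lemma lim_ge_ev (a : nat -> R) l b m0 :
  Un_cv a l -> (forall m, (m >= m0)%nat -> b <= a m) -> b <= l.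
Proof.
  intros Ha Hb. destruct (Rle_or_lt b l) as [|H]; [assumption|].
  destruct (Ha (b - l)) as [N HN]; [lra|].
  specialize (HN (max N m0) ltac:(lia)). specialize (Hb (max N m0) ltac:(lia)).
  unfold Rdist in HN. apply Rabs_def2 in HN. lra.
Qed.

Lemma partial_le_sum (a : nat -> R) l n :
  (forall k, 0 <= a k) -> infinite_sum a l -> sum_f_R0 a n <= l.
Proof.
  intros H Ha. apply (lim_ge_ev (sum_f_R0 a) l _ n Ha).
  intros m Hm. induction Hm; [lra|]. simpl. specialize (H (S m)). lra.
Qed.

Lemma sum1_mono (w : nat -> R) J L :
  (forall j, (1 <= j)%nat -> 0 <= w j) -> (J <= L)%nat -> sum1 w J <= sum1 w L.
Proof.
  intros H HJ. induction HJ; [lra|]. simpl. specialize (H (S m) ltac:(lia)). lra.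
Qed.

Lemma sum1_tail (f w : nat -> R) J L :
  (J <= L)%nat -> (forall j, (1 <= j <= L)%nat -> Rabs (f j) <= w j) ->
  Rabs (sum1 f L - sum1 f J) <= sum1 w L - sum1 w J.
Proof.
  intros HJ. induction HJ; intros H.
  - rewrite !Rminus_eq_0, Rabs_R0. lra.
  - simpl. specialize (IHHJ (fun j Hj => H j ltac:(lia))).
    specialize (H (S m) ltac:(lia)).
    replace (sum1 f m + f (S m) - sum1 f J) with ((sum1 f m - sum1 f J) + f (S m)) by ring.
    eapply Rle_trans; [apply Rabs_triang|]. lra.
Qed.

Lemma sum1_cv (u : nat -> nat -> R) (v : nat -> R) J :
  (forall j, (1 <= j <= J)%nat -> Un_cv (fun m => u m j) (v j)) ->
  Un_cv (fun m => sum1 (u m) J) (sum1 v J).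
Proof.
  induction J; intros H.
  - simpl. intros e He. exists 0%nat. intros. unfold Rdist. rewrite Rminus_eq_0, Rabs_R0. lra.
  - simpl. apply CV_plus; [apply IHJ; intros; apply H; lia| apply H; lia].
Qed.

Lemma tannery (u : nat -> nat -> R) (v w : nat -> R) (L : nat -> nat) W :
  (forall m j, (1 <= j <= L m)%nat -> Rabs (u m j) <= w j) ->
  infinite_sum (fun i => w (S i)) W ->
  (forall j, (1 <= j)%nat -> Un_cv (fun m => u m j) (v j)) ->
  (forall J, exists m0, forall m, (m >= m0)%nat -> (J <= L m)%nat) ->
  exists V, infinite_sum (fun i => v (S i)) V /\ Un_cv (fun m => sum1 (u m) (L m)) V.
Proof.
  intros Hb HW Hc HL.
  assert (Hvw : forall j, (1 <= j)%nat -> Rabs (v j) <= w j).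
  { intros j Hj. destruct (HL j) as [m0 Hm0].
    apply (lim_le_ev (fun m => Rabs (u m j)) _ _ m0).
    - apply cv_cvabs. apply Hc; assumption.
    - intros m Hm. apply Hb. specialize (Hm0 m Hm). lia. }
  assert (Hw0 : forall j, (1 <= j)%nat -> 0 <= w j).
  { intros j Hj. specialize (Hvw j Hj). pose proof (Rabs_pos (v j)). lra. }
  assert (Hex : ex_series (fun i => v (S i))).
  { apply (@ex_series_le R_AbsRing R_CompleteNormedModule _ (fun i => w (S i))).
    - intro n. apply (Hvw (S n)). lia.
    - exists W. apply inf_sum_is. exact HW. }
  destruct Hex as [V HV]. apply is_inf_sum in HV.
  exists V. split; [exact HV|].
  assert (HwW : forall n, sum1 w n <= W).
  { intros [|n].
    - simpl. apply (inf_sum_nonneg (fun i => w (S i))); [intros; apply Hw0; lia| exact HW].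
    - rewrite sum1_sumf. apply partial_le_sum; [intros; apply Hw0; lia| exact HW]. }
  assert (HvT : forall J, Rabs (V - sum1 v J) <= W - sum1 w J).
  { intros J.
    assert (Hcv : Un_cv (fun n => Rabs (sum1 v (S n) - sum1 v J)) (Rabs (V - sum1 v J))).
    { apply cv_cvabs. intros e He. destruct (HV e He) as [N HN]. exists N. intros n Hn.
      unfold Rdist. rewrite sum1_sumf.
      replace (sum_f_R0 (fun i : nat => v (S i)) n - sum1 v J - (V - sum1 v J))
        with (sum_f_R0 (fun i : nat => v (S i)) n - V) by ring. apply HN; lia. }
    apply (lim_le_ev _ _ _ J Hcv). intros m Hm.
    eapply Rle_trans. apply (sum1_tail v w); [lia| intros; apply Hvw; lia].
    specialize (HwW (S m)). lra. }
  intros eps Heps.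
  assert (HWc : Un_cv (fun n => sum1 w (S n)) W).
  { intros e He. destruct (HW e He) as [N HN]. exists N. intros n Hn.
    rewrite sum1_sumf. apply HN; lia. }
  destruct (HWc (eps / 3)) as [n0 Hn0]; [lra|].
  set (J := S n0).
  assert (HJ : W - sum1 w J < eps / 3).
  { specialize (Hn0 n0 ltac:(lia)). unfold Rdist in Hn0. apply Rabs_def2 in Hn0. unfold J. lra. }
  destruct (sum1_cv u v J (fun j Hj => Hc j ltac:(lia)) (eps / 3)) as [m1 Hm1]; [lra|].
  destruct (HL J) as [m0 Hm0].
  exists (max m0 m1). intros m Hm. unfold Rdist.
  specialize (Hm1 m ltac:(lia)). unfold Rdist in Hm1.
  specialize (Hm0 m ltac:(lia)).
  pose proof (sum1_tail (u m) w J (L m) Hm0 (Hb m)) as T1.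
  pose proof (HvT J) as T3. pose proof (HwW (L m)) as T4.
  replace (sum1 (u m) (L m) - V) with
    ((sum1 (u m) (L m) - sum1 (u m) J) + (sum1 (u m) J - sum1 v J) + (sum1 v J - V)) by ring.
  eapply Rle_lt_trans. apply Rabs_triang.
  eapply Rle_lt_trans. apply Rplus_le_compat_r. apply Rabs_triang.
  rewrite (Rabs_minus_sym (sum1 v J)). lra.
Qed.

Lemma sin_lb3 z : 0 <= z <= 4 -> z - z ^ 3 / 6 <= sin z.
Proof.
  intros Hz. destruct (pre_sin_bound z 0 ltac:(lra) ltac:(lra)) as [H _].
  unfold sin_approx, sin_term in H. simpl in H. lra.
Qed.

Lemma sin_ub1 z : 0 <= z <= 4 -> sin z <= z.
Proof.
  intros Hz. destruct (pre_sin_bound z 0 ltac:(lra) ltac:(lra)) as [_ H].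
  unfold sin_approx, sin_term in H. simpl in H.
  assert (H1 : 0 <= z * z * z) by (apply Rmult_le_pos; [nra|lra]).
  assert (H2 : z * z <= 16) by nra.
  assert (H3 : 0 <= z*z*z * (20 - z * z)) by (apply Rmult_le_pos; lra).
  lra.
Qed.

Lemma cos_lb2 z : -2 <= z <= 2 -> 1 - z ^ 2 / 2 <= cos z.
Proof.
  intros Hz. destruct (pre_cos_bound z 0 ltac:(lra) ltac:(lra)) as [H _].
  unfold cos_approx, cos_term in H. simpl in H. nra.
Qed.

Lemma sin_lin z : 0 <= z <= 2 -> z / 3 <= sin z.
Proof. intros Hz. pose proof (sin_lb3 z ltac:(lra)). nra. Qed.

Definition ct (y : R) := cos y / sin y.

Lemma ct_opp z : ct (- z) = - ct z.
Proof. unfold ct. rewrite <- cos_sym, sin_neg. unfold Rdiv. rewrite Rinv_opp. ring. Qed.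

Lemma zct_bound_pos z : 0 < z <= 1 -> Rabs (z * ct z - 1) <= z ^ 2.
Proof.
  intros Hz. unfold ct.
  pose proof (sin_lb3 z ltac:(lra)). pose proof (sin_ub1 z ltac:(lra)).
  pose proof (cos_lb2 z ltac:(lra)). pose proof (COS_bound z).
  assert (Hs : 5 * z / 6 <= sin z) by nra.
  assert (Hs0 : 0 < sin z) by lra.
  replace (z * (cos z / sin z) - 1) with ((z * cos z - sin z) / sin z) by (field; lra).
  rewrite Rabs_div by lra. rewrite (Rabs_pos_eq (sin z)) by lra.
  apply Rmult_le_reg_r with (sin z); [lra|].
  unfold Rdiv. rewrite Rmult_assoc, Rinv_l, Rmult_1_r by lra.
  apply Rabs_le. split; nra.
Qed.

Lemma zct_bound z : z <> 0 -> Rabs z <= 1 -> Rabs (z * ct z - 1) <= z ^ 2.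
Proof.
  intros Hz Hz1. destruct (Rlt_or_le 0 z) as [Hp|Hn].
  - rewrite Rabs_pos_eq in Hz1 by lra. apply zct_bound_pos; lra.
  - rewrite Rabs_left1 in Hz1 by lra.
    replace (z * ct z) with ((- z) * ct (- z)) by (rewrite ct_opp; ring).
    replace (z ^ 2) with ((- z) ^ 2) by ring. apply zct_bound_pos. lra.
Qed.

Lemma zcsc_bound_pos z : 0 < z <= 1 -> Rabs ((z / sin z) ^ 2 - 1) <= z ^ 2.
Proof.
  intros Hz.
  pose proof (sin_lb3 z ltac:(lra)). pose proof (sin_ub1 z ltac:(lra)).
  assert (Hs : 5 * z / 6 <= sin z) by nra.
  assert (Hs0 : 0 < sin z) by lra.
  replace ((z / sin z) ^ 2 - 1) with ((z ^ 2 - sin z ^ 2) / sin z ^ 2) by (field; lra).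
  assert (Hs2 : 0 < sin z ^ 2) by (apply pow_lt; lra).
  rewrite Rabs_div by lra. rewrite (Rabs_pos_eq (sin z ^ 2)) by lra.
  apply Rmult_le_reg_r with (sin z ^ 2); [lra|].
  unfold Rdiv. rewrite Rmult_assoc, Rinv_l, Rmult_1_r by lra.
  assert (Hd : 0 <= z - sin z <= z ^ 3 / 6) by lra.
  rewrite Rabs_pos_eq by nra.
  assert (z ^ 2 - sin z ^ 2 = (z - sin z) * (z + sin z)) by ring.
  assert ((z - sin z) * (z + sin z) <= z ^ 3 / 6 * (2 * z)) by (apply Rmult_le_compat; nra).
  assert (z ^ 3 / 6 * (2 * z) <= z ^ 2 * sin z ^ 2).
  { assert (z ^ 2 * (25 * z ^ 2 / 36) <= z ^ 2 * sin z ^ 2).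
    { apply Rmult_le_compat_l; [nra|]. nra. }
    nra. }
  lra.
Qed.

Lemma zcsc_bound z : z <> 0 -> Rabs z <= 1 -> Rabs ((z / sin z) ^ 2 - 1) <= z ^ 2.
Proof.
  intros Hz Hz1. destruct (Rlt_or_le 0 z) as [Hp|Hn].
  - rewrite Rabs_pos_eq in Hz1 by lra. apply zcsc_bound_pos; lra.
  - rewrite Rabs_left1 in Hz1 by lra.
    replace ((z / sin z) ^ 2) with ((- z / sin (- z)) ^ 2)
      by (rewrite sin_neg; field; intro H; assert (0 < sin (- z)) by
            (pose proof (sin_lb3 (- z) ltac:(lra)); nra); rewrite sin_neg in H0; lra).
    replace (z ^ 2) with ((- z) ^ 2) by ring. apply zcsc_bound_pos. lra.
Qed.

Lemma ztan_bound z : 0 < z <= 1 -> 0 <= z * (sin z / cos z) <= 2 * z ^ 2.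
Proof.
  intros Hz. pose proof (sin_lb3 z ltac:(lra)). pose proof (sin_ub1 z ltac:(lra)).
  pose proof (cos_lb2 z ltac:(lra)).
  assert (Hc : 1 / 2 <= cos z) by nra.
  assert (Hs0 : 0 < sin z) by nra.
  split.
  - apply Rmult_le_pos; [lra|]. apply Rlt_le, Rdiv_lt_0_compat; lra.
  - replace (z * (sin z / cos z)) with (z * sin z / cos z) by (field; lra).
    apply Rmult_le_reg_r with (cos z); [lra|].
    unfold Rdiv. rewrite Rmult_assoc, Rinv_l, Rmult_1_r by lra. nra.
Qed.

Lemma zsec_bound z : 0 < z <= 1 -> 0 <= (z / cos z) ^ 2 <= 4 * z ^ 2.
Proof.
  intros Hz. pose proof (cos_lb2 z ltac:(lra)). pose proof (COS_bound z).
  assert (Hc : 1 / 2 <= cos z) by nra.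
  split; [apply pow2_ge_0|].
  replace ((z / cos z) ^ 2) with (z ^ 2 / cos z ^ 2) by (field; lra).
  apply Rmult_le_reg_r with (cos z ^ 2); [nra|].
  unfold Rdiv. rewrite Rmult_assoc, Rinv_l, Rmult_1_r by nra.
  assert (cos z ^ 2 >= 1 / 4) by nra. assert (0 <= z ^ 2) by apply pow2_ge_0. nra.
Qed.

Lemma pow2_ge m : INR m + 1 <= 2 ^ m.
Proof.
  induction m; [simpl; lra|]. rewrite S_INR. change (2 ^ S m) with (2 * 2 ^ m).
  assert (1 <= 2 ^ m) by (apply pow_R1_Rle; lra). lra.
Qed.

Lemma pow2_large A : exists m0, forall m, (m >= m0)%nat -> A <= 2 ^ m.
Proof.
  destruct (INR_unbounded A) as [m0 Hm0]. exists m0. intros m Hm.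
  pose proof (pow2_ge m). assert (INR m0 <= INR m) by (apply le_INR; lia). lra.
Qed.

Lemma cv_geom (a : nat -> R) l C m0 :
  (forall m, (m >= m0)%nat -> Rabs (a m - l) <= C / 2 ^ m) -> Un_cv a l.
Proof.
  intros H eps Heps.
  destruct (pow2_large (Rabs C / eps + 1)) as [m1 Hm1].
  exists (max m0 m1). intros m Hm. unfold Rdist.
  specialize (H m ltac:(lia)). specialize (Hm1 m ltac:(lia)).
  assert (Hp : 0 < 2 ^ m) by (apply pow_lt; lra).
  eapply Rle_lt_trans; [exact H|].
  apply Rmult_lt_reg_r with (2 ^ m); [lra|].
  unfold Rdiv. rewrite Rmult_assoc, Rinv_l, Rmult_1_r by lra.
  assert (C <= Rabs C) by apply Rle_abs.
  assert (Rabs C / eps * eps = Rabs C) by (field; lra).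
  nra.
Qed.

Definition Mr (m : nat) : R := 2 ^ S m.

Lemma Mr_pos m : 0 < Mr m.
Proof. apply pow_lt; lra. Qed.

Lemma Mr_ge m : 2 ^ m <= Mr m.
Proof. unfold Mr. simpl. assert (0 < 2 ^ m) by (apply pow_lt; lra). lra. Qed.

Lemma Mr_large A : exists m0, forall m, (m >= m0)%nat -> A <= Mr m.
Proof.
  destruct (pow2_large A) as [m0 H]. exists m0. intros m Hm.
  specialize (H m Hm). pose proof (Mr_ge m). lra.
Qed.

Lemma cv_ct (b : R) : b <> 0 -> Un_cv (fun m => / Mr m * ct (b / Mr m)) (/ b).
Proof.
  intros Hb. destruct (Mr_large (Rabs b)) as [m0 Hm0].
  apply (cv_geom _ _ (Rabs b) m0). intros m Hm.
  specialize (Hm0 m Hm). pose proof (Mr_pos m) as HM. pose proof (Mr_ge m) as HM2.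
  set (z := b / Mr m).
  assert (Hz0 : z <> 0) by (unfold z; unfold Rdiv; apply Rmult_integral_contrapositive_currified; [lra| apply Rinv_neq_0_compat; lra]).
  assert (Hz1 : Rabs z <= 1).
  { unfold z. rewrite Rabs_div, (Rabs_pos_eq (Mr m)) by lra.
    apply Rmult_le_reg_r with (Mr m); [lra|]. unfold Rdiv.
    rewrite Rmult_assoc, Rinv_l by lra. lra. }
  pose proof (zct_bound z Hz0 Hz1) as Hb2.
  replace (/ Mr m * ct z - / b) with (/ b * (z * ct z - 1)) by (unfold z; field; lra).
  rewrite Rabs_mult, Rabs_inv.
  assert (Hab : 0 < Rabs b) by (apply Rabs_pos_lt; lra).
  apply Rle_trans with (/ Rabs b * z ^ 2).
  { apply Rmult_le_compat_l; [apply Rlt_le, Rinv_0_lt_compat; lra| exact Hb2]. }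
  unfold z. replace (/ Rabs b * (b / Mr m) ^ 2) with (Rabs b / (Mr m * Mr m)).
  2:{ replace ((b / Mr m) ^ 2) with (Rabs b ^ 2 / (Mr m) ^ 2) by (rewrite pow2_abs; field; lra).
      field. split; lra. }
  assert (0 < 2 ^ m) by (apply pow_lt; lra).
  assert (1 <= 2 ^ m) by (apply pow_R1_Rle; lra).
  apply Rmult_le_compat_l; [lra|]. apply Rinv_le_contravar; [lra|]. nra.
Qed.

Lemma sin_nz z : z <> 0 -> Rabs z <= 2 -> sin z <> 0.
Proof.
  intros Hz Hz2. destruct (Rlt_or_le 0 z).
  - rewrite Rabs_pos_eq in Hz2 by lra. pose proof (sin_lin z ltac:(lra)). lra.
  - rewrite Rabs_left1 in Hz2 by lra. pose proof (sin_lin (- z) ltac:(lra)).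
    rewrite sin_neg in H0. lra.
Qed.

Lemma cv_csc (b : R) : b <> 0 -> Un_cv (fun m => / Mr m ^ 2 / sin (b / Mr m) ^ 2) (/ b ^ 2).
Proof.
  intros Hb. destruct (Mr_large (Rabs b)) as [m0 Hm0].
  apply (cv_geom _ _ 1 m0). intros m Hm.
  specialize (Hm0 m Hm). pose proof (Mr_pos m) as HM. pose proof (Mr_ge m) as HM2.
  set (z := b / Mr m).
  assert (Hz0 : z <> 0) by (unfold z; unfold Rdiv; apply Rmult_integral_contrapositive_currified; [lra| apply Rinv_neq_0_compat; lra]).
  assert (Hz1 : Rabs z <= 1).
  { unfold z. rewrite Rabs_div, (Rabs_pos_eq (Mr m)) by lra.
    apply Rmult_le_reg_r with (Mr m); [lra|]. unfold Rdiv.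
    rewrite Rmult_assoc, Rinv_l by lra. lra. }
  assert (Hsz : sin z <> 0) by (apply sin_nz; lra).
  pose proof (zcsc_bound z Hz0 Hz1) as Hb2.
  assert (Hzd : z = b / Mr m) by reflexivity. clearbody z.
  assert (Hbz : b = z * Mr m) by (rewrite Hzd; field; lra).
  replace (/ Mr m ^ 2 / sin z ^ 2 - / b ^ 2) with (/ b ^ 2 * ((z / sin z) ^ 2 - 1))
    by (rewrite Hbz; field; repeat split; lra).
  rewrite Rabs_mult, Rabs_inv.
  assert (Hb2p : 0 < b ^ 2) by (apply pow2_gt_0; exact Hb).
  rewrite (Rabs_pos_eq (b ^ 2)) by lra.
  apply Rle_trans with (/ b ^ 2 * z ^ 2).
  { apply Rmult_le_compat_l; [apply Rlt_le, Rinv_0_lt_compat; lra| exact Hb2]. }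
  rewrite Hzd. replace (/ b ^ 2 * (b / Mr m) ^ 2) with (1 / (Mr m * Mr m)) by (field; split; lra).
  assert (0 < 2 ^ m) by (apply pow_lt; lra).
  assert (1 <= 2 ^ m) by (apply pow_R1_Rle; lra).
  apply Rmult_le_compat_l; [lra|]. apply Rinv_le_contravar; [lra|]. nra.
Qed.

Lemma sin_shift2 y : sin (y + PI / 2) = cos y.
Proof. rewrite sin_plus, sin_PI2, cos_PI2. ring. Qed.
Lemma cos_shift2 y : cos (y + PI / 2) = - sin y.
Proof. rewrite cos_plus, sin_PI2, cos_PI2. ring. Qed.

Lemma sc_pos y : 0 < y < PI / 2 -> 0 < sin y /\ 0 < cos y.
Proof.
  intros Hy. split.
  - apply sin_gt_0; lra.
  - apply cos_gt_0; lra.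
Qed.

Lemma ct_dup y : 0 < y < PI / 2 -> ct y + ct (y + PI / 2) = 2 * ct (2 * y).
Proof.
  intros Hy. destruct (sc_pos y Hy) as [Hs Hc].
  unfold ct. rewrite sin_shift2, cos_shift2, sin_2a, cos_2a. field. lra.
Qed.

Lemma csc_dup y : 0 < y < PI / 2 -> / sin y ^ 2 + / sin (y + PI / 2) ^ 2 = 4 * / sin (2 * y) ^ 2.
Proof.
  intros Hy. destruct (sc_pos y Hy) as [Hs Hc].
  rewrite sin_shift2, sin_2a.
  assert (H1 : sin y ^ 2 + cos y ^ 2 = 1) by (rewrite <- (sin2_cos2 y); unfold Rsqr; ring).
  transitivity ((sin y ^ 2 + cos y ^ 2) * (4 * / (2 * sin y * cos y) ^ 2)).
  - field. lra.
  - rewrite H1. ring.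
Qed.

Lemma pow2_nat_pos m : (1 <= 2 ^ m)%nat.
Proof. induction m; simpl; lia. Qed.

Lemma iter_gen (f : R -> R) (c : R) x m :
  0 < x < PI -> c <> 0 ->
  (forall y, 0 < y < PI / 2 -> f y + f (y + PI / 2) = c * f (2 * y)) ->
  f x = / c ^ m * sum_f_R0 (fun j => f ((x + INR j * PI) / INR (2 ^ m)%nat)) (2 ^ m - 1)%nat.
Proof.
  intros Hx Hc Hd. induction m as [|m IH].
  - simpl. replace ((x + 0 * PI) / 1) with x by field. field.
  - rewrite IH. set (M := (2 ^ m)%nat).
    assert (HM : (1 <= M)%nat) by apply pow2_nat_pos.
    assert (HMr : 1 <= INR M) by (apply (le_INR 1); exact HM).
    replace (2 ^ S m)%nat with (2 * M)%nat by (unfold M; simpl; lia).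
    replace (2 * M - 1)%nat with ((M - 1) + S (M - 1))%nat by lia.
    rewrite sumf_split. rewrite <- sumf_plus.
    rewrite (sum_eq (fun j => f ((x + INR j * PI) / INR (2 * M)) +
     f ((x + INR (S (M - 1) + j) * PI) / INR (2 * M))) (fun j => c * f ((x + INR j * PI) / INR M))).
    + rewrite sumf_scal. simpl pow. field. split; [|exact Hc].
      apply pow_nonzero. exact Hc.
    + intros j Hj.
      replace (S (M - 1) + j)%nat with (M + j)%nat by lia.
      rewrite plus_INR, mult_INR.
      set (y := (x + INR j * PI) / (INR 2 * INR M)).
      assert (HjM : INR j + 1 <= INR M).
      { rewrite <- S_INR. apply le_INR. lia. }
      assert (Hj0 : 0 <= INR j) by apply pos_INR.
      replace ((x + (INR M + INR j) * PI) / (INR 2 * INR M)) with (y + PI / 2)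
        by (unfold y; simpl; field; lra).
      replace ((x + INR j * PI) / INR M) with (2 * y) by (unfold y; simpl; field; lra).
      apply Hd. unfold y. simpl. split.
      * apply Rdiv_lt_0_compat; [nra| lra].
      * apply Rmult_lt_reg_r with (2 * INR M); [lra|]. unfold Rdiv.
        rewrite Rmult_assoc, Rinv_l by lra. nra.
Qed.

Lemma ct_per z : ct (z + PI) = ct z.
Proof. unfold ct. rewrite neg_sin, neg_cos. unfold Rdiv. rewrite Rinv_opp. ring. Qed.

Lemma ct_shift2 z : ct (z + PI / 2) = - (sin z / cos z).
Proof. unfold ct. rewrite sin_shift2, cos_shift2. unfold Rdiv. ring. Qed.

Lemma assemble3 (C a b V : R) (A Bs S : nat -> R) :
  (forall m, C = A m + Bs m + S m) ->
  Un_cv A a -> Un_cv Bs b -> Un_cv S V -> C = a + b + V.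
Proof.
  intros H HA HB HS.
  apply (UL_sequence (fun m => A m + Bs m + S m)).
  - intros e He. exists 0%nat. intros. rewrite <- H. unfold Rdist. rewrite Rminus_eq_0, Rabs_R0. lra.
  - apply CV_plus; [apply CV_plus|]; assumption.
Qed.

Lemma cv_const_mult (a : nat -> R) l c : Un_cv a l -> Un_cv (fun m => c * a m) (c * l).
Proof.
  intros H. apply (CV_mult (fun _ => c) a c l); [|exact H].
  intros e He. exists 0%nat. intros. unfold Rdist. rewrite Rminus_eq_0, Rabs_R0. lra.
Qed.

Lemma L_large J : exists m0, forall m, (m >= m0)%nat -> (J <= 2 ^ m - 1)%nat.
Proof.
  exists J. intros m Hm. assert (forall k, (k + 1 <= 2 ^ k)%nat).
  { induction k; simpl; lia. }
  specialize (H m). lia.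
Qed.

Lemma INR_K m : INR (2 * 2 ^ m)%nat = Mr m.
Proof. unfold Mr. rewrite mult_INR, pow_INR. change (INR 2) with (1 + 1). simpl pow. replace (1 + 1) with 2 by ring. ring. Qed.

Lemma Mr_K m : Mr m = 2 * INR (2 ^ m)%nat.
Proof. rewrite <- INR_K. rewrite mult_INR. change (INR 2) with (1 + 1). ring. Qed.

Lemma pair_range x m j : 0 < x < PI -> (1 <= j <= 2 ^ m - 1)%nat ->
  0 < (x + INR j * PI) / Mr m < PI / 2 /\ 0 < (INR j * PI - x) / Mr m < PI / 2.
Proof.
  intros Hx Hj. rewrite Mr_K. set (K := INR (2 ^ m)%nat).
  assert (HjK : INR j + 1 <= K) by (unfold K; rewrite <- S_INR; apply le_INR; pose proof (pow2_nat_pos m); lia).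
  assert (Hj1 : 1 <= INR j) by (apply (le_INR 1); lia).
  assert (HK : 0 < K) by lra.
  pose proof PI_RGT_0.
  repeat split.
  - apply Rdiv_lt_0_compat; nra.
  - apply Rmult_lt_reg_r with (2 * K); [lra|]. unfold Rdiv.
    rewrite Rmult_assoc, Rinv_l by lra. nra.
  - apply Rdiv_lt_0_compat; nra.
  - apply Rmult_lt_reg_r with (2 * K); [lra|]. unfold Rdiv.
    rewrite Rmult_assoc, Rinv_l by lra. nra.
Qed.

Lemma ct_sum_sin p q : sin p <> 0 -> sin q <> 0 -> ct p + ct q = sin (p + q) / (sin p * sin q).
Proof. intros. unfold ct. rewrite sin_plus. field. split; assumption. Qed.

Lemma inv_sq_series C : exists W, infinite_sum (fun i => C * / INR (S i) ^ 2) W.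
Proof.
  destruct inv_sq_ex as [W0 HW0]. exists (C * W0). apply inf_sum_scal. apply is_inf_sum. exact HW0.
Qed.

Theorem pf_cot x : 0 < x < PI ->
  infinite_sum (fun i => x * (/ (x + INR (S i) * PI) + / (x - INR (S i) * PI))) (x * ct x - 1).
Proof.
  intros Hx. pose proof PI_RGT_0 as Hpi. pose proof PI_4 as Hpi4.
  set (u := fun m j => x * (/ Mr m * ct ((x + INR j * PI) / Mr m) + / Mr m * ct ((x - INR j * PI) / Mr m))).
  set (v := fun j => x * (/ (x + INR j * PI) + / (x - INR j * PI))).
  set (C := 18 * x ^ 2 / (PI * (PI - x))).
  set (w := fun j => C * / INR j ^ 2).
  destruct (inv_sq_series C) as [W HW].
  assert (Hbd : forall m j, (1 <= j <= 2 ^ m - 1)%nat -> Rabs (u m j) <= w j).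
  { intros m j Hj. destruct (pair_range x m j Hx Hj) as [[Hp1 Hp2] [Hq1 Hq2]].
    pose proof (Mr_pos m) as HM. pose proof (Mr_ge m).
    assert (HMr2 : 2 <= Mr m) by (unfold Mr; simpl; assert (1 <= 2 ^ m) by (apply pow_R1_Rle; lra); lra).
    set (p := (x + INR j * PI) / Mr m) in *. set (q := (x - INR j * PI) / Mr m).
    assert (Hq : q = - ((INR j * PI - x) / Mr m)) by (unfold q; field; lra).
    set (q' := (INR j * PI - x) / Mr m) in *.
    assert (Hsp : p / 3 <= sin p) by (apply sin_lin; lra).
    assert (Hsq : q' / 3 <= sin q') by (apply sin_lin; lra).
    unfold u. fold p q. rewrite <- Rmult_plus_distr_l.
    rewrite ct_sum_sin by (try rewrite Hq, sin_neg; lra).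
    assert (Hpq : p + q = 2 * x / Mr m) by (unfold p, q; field; lra).
    rewrite Hpq, Hq, sin_neg.
    assert (H2x : 0 < 2 * x / Mr m <= 4) by (split; [apply Rdiv_lt_0_compat; lra|];
       apply Rmult_le_reg_r with (Mr m); [lra|]; unfold Rdiv; rewrite Rmult_assoc, Rinv_l by lra; nra).
    pose proof (sin_ub1 (2 * x / Mr m) ltac:(lra)) as Hs2.
    assert (Hs2p : 0 <= sin (2 * x / Mr m)) by (apply sin_ge_0; [lra|]; 
       apply Rmult_le_reg_r with (Mr m); [lra|]; unfold Rdiv; rewrite Rmult_assoc, Rinv_l by lra; nra).
    assert (Hj1 : 1 <= INR j) by (apply (le_INR 1); lia).
    replace (x * (/ Mr m * (sin (2 * x / Mr m) / (sin p * - sin q'))))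
      with (- (x * / Mr m * sin (2 * x / Mr m) / (sin p * sin q'))) by (field; lra).
    rewrite Rabs_Ropp. rewrite Rabs_pos_eq.
    2:{ apply Rmult_le_pos; [apply Rmult_le_pos; [apply Rmult_le_pos; [lra| apply Rlt_le, Rinv_0_lt_compat; lra]| lra]|].
        apply Rlt_le, Rinv_0_lt_compat. nra. }
    unfold w, C.
    apply Rle_trans with (x * / Mr m * (2 * x / Mr m) / (p / 3 * (q' / 3))).
    { unfold Rdiv. apply Rmult_le_compat.
      - apply Rmult_le_pos; [apply Rmult_le_pos; [lra| apply Rlt_le, Rinv_0_lt_compat; lra]| lra].
      - apply Rlt_le, Rinv_0_lt_compat. nra.
      - apply Rmult_le_compat_l; [apply Rmult_le_pos; [lra| apply Rlt_le, Rinv_0_lt_compat; lra]|]. lra.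
      - apply Rinv_le_contravar; [nra|]. apply Rmult_le_compat; nra. }
    unfold p, q'.
    replace (x * / Mr m * (2 * x / Mr m) / ((x + INR j * PI) / Mr m / 3 * ((INR j * PI - x) / Mr m / 3)))
      with (18 * x ^ 2 / ((x + INR j * PI) * (INR j * PI - x))) by (field; repeat split; nra).
    replace (18 * x ^ 2 / (PI * (PI - x)) * / INR j ^ 2) with (18 * x ^ 2 * / (PI * (PI - x) * INR j ^ 2))
      by (field; split; nra).
    unfold Rdiv. apply Rmult_le_compat_l; [nra|].
    apply Rinv_le_contravar.
    { apply Rmult_lt_0_compat; [apply Rmult_lt_0_compat; lra| apply pow_lt; lra]. }
    assert (H1 : INR j * PI <= x + INR j * PI) by lra.
    assert (H2 : INR j * (PI - x) <= INR j * PI - x) by nra.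
    assert (H3 : INR j * PI * (INR j * (PI - x)) <= (x + INR j * PI) * (INR j * PI - x)).
    { apply Rmult_le_compat; nra. }
    replace (PI * (PI - x) * INR j ^ 2) with (INR j * PI * (INR j * (PI - x))) by ring. exact H3. }
  assert (Hcv : forall j, (1 <= j)%nat -> Un_cv (fun m => u m j) (v j)).
  { intros j Hj. unfold u, v. apply cv_const_mult. apply CV_plus.
    - apply cv_ct. assert (0 <= INR j) by apply pos_INR. nra.
    - apply cv_ct. assert (1 <= INR j) by (apply (le_INR 1); lia). nra. }
  destruct (tannery u v w (fun m => (2 ^ m - 1)%nat) W Hbd HW Hcv L_large) as [V [HV HVcv]].
  assert (Hid : forall m, x * ct x =
     (x / Mr m) * ct (x / Mr m) + (- ((x / Mr m) * (sin (x / Mr m) / cos (x / Mr m))))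
     + sum1 (u m) (2 ^ m - 1)%nat).
  { intros m. rewrite (iter_gen ct 2 x (S m) Hx ltac:(lra) ct_dup) at 1.
    replace (2 ^ S m - 1)%nat with (2 * (2 ^ m - 1) + 1)%nat by (simpl; pose proof (pow2_nat_pos m); lia).
    rewrite sumf_fold.
    replace (INR (2 ^ S m)%nat) with (Mr m) by (rewrite <- INR_K; reflexivity).
    replace (/ 2 ^ S m) with (/ Mr m) by reflexivity.
    replace (S (2 ^ m - 1)) with (2 ^ m)%nat by (pose proof (pow2_nat_pos m); lia).
    rewrite (sum1_ext (fun j => ct ((x + INR j * PI) / Mr m) + ct ((x + INR (2 * (2 ^ m - 1) + 2 - j) * PI) / Mr m))
       (fun j => ct ((x + INR j * PI) / Mr m) + ct ((x - INR j * PI) / Mr m))).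
    2:{ intros j Hj. f_equal. rewrite <- (ct_per ((x - INR j * PI) / Mr m)). f_equal.
        rewrite minus_INR by (pose proof (pow2_nat_pos m); lia).
        replace (INR (2 * (2 ^ m - 1) + 2)) with (Mr m) by (rewrite <- INR_K; f_equal; pose proof (pow2_nat_pos m); lia).
        pose proof (Mr_pos m). field. lra. }
    unfold u.
    rewrite (sum1_ext (fun j => x * (/ Mr m * ct ((x + INR j * PI) / Mr m) + / Mr m * ct ((x - INR j * PI) / Mr m)))
       (fun j => (x * / Mr m) * (ct ((x + INR j * PI) / Mr m) + ct ((x - INR j * PI) / Mr m)))) by (intros; ring).
    rewrite sum1_scal.
    replace ((x + INR (2 ^ m) * PI) / Mr m) with (x / Mr m + PI / 2)
      by (rewrite Mr_K; field; pose proof (pow2_nat_pos m); apply not_0_INR; lia).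
    rewrite ct_shift2. replace ((x + INR 0 * PI) / Mr m) with (x / Mr m) by (simpl; field; pose proof (Mr_pos m); lra).
    unfold Rdiv. ring. }
  assert (HA : Un_cv (fun m => (x / Mr m) * ct (x / Mr m)) 1).
  { replace 1 with (x * / x) by (field; lra).
    apply (Un_cv_ext (fun m => x * (/ Mr m * ct (x / Mr m)))).
    { intros m. unfold Rdiv. ring. }
    apply cv_const_mult. apply cv_ct. lra. }
  assert (HB : Un_cv (fun m => - ((x / Mr m) * (sin (x / Mr m) / cos (x / Mr m)))) 0).
  { destruct (Mr_large x) as [m0 Hm0].
    apply (cv_geom _ _ (2 * x ^ 2) m0). intros m Hm.
    pose proof (Mr_pos m). pose proof (Mr_ge m). specialize (Hm0 m Hm).
    assert (1 <= 2 ^ m) by (apply pow_R1_Rle; lra).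
    assert (Hz1 : 0 < x / Mr m <= 1).
    { split; [apply Rdiv_lt_0_compat; lra|].
      apply Rmult_le_reg_r with (Mr m); [lra|]. unfold Rdiv. rewrite Rmult_assoc, Rinv_l by lra. lra. }
    pose proof (ztan_bound _ Hz1) as Ht.
    rewrite Rminus_0_r, Rabs_Ropp, Rabs_pos_eq by lra.
    eapply Rle_trans; [apply Ht|].
    replace (2 * (x / Mr m) ^ 2) with (2 * x ^ 2 / (Mr m * Mr m)) by (field; lra).
    unfold Rdiv. apply Rmult_le_compat_l; [nra|]. apply Rinv_le_contravar; [apply pow_lt; lra| nra]. }
  pose proof (assemble3 _ _ _ _ _ _ _ Hid HA HB HVcv) as Hfin.
  replace (x * ct x - 1) with V by lra.
  exact HV.
Qed.

Lemma four_pow k : 4 ^ k = (2 ^ k) ^ 2.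
Proof. induction k; simpl; [ring|]. rewrite IHk. ring. Qed.

Lemma csc_piece_bound (M y b : R) : 0 < M -> 0 < y <= 2 -> M * y = b ->
  / M ^ 2 / sin y ^ 2 <= 9 / b ^ 2.
Proof.
  intros HM Hy Hb. pose proof (sin_lin y ltac:(lra)) as Hs.
  assert (0 < sin y) by lra. subst b.
  unfold Rdiv.
  replace (9 * / (M * y) ^ 2) with (/ (M ^ 2 * (y / 3) ^ 2)) by (field; lra).
  rewrite <- Rinv_mult. apply Rinv_le_contravar.
  - apply Rmult_lt_0_compat; apply pow_lt; lra.
  - apply Rmult_le_compat_l; [apply pow_le; lra|]. apply pow_incr. lra.
Qed.

Theorem pf_csc x : 0 < x < PI ->
  infinite_sum (fun i => x ^ 2 * (/ (x + INR (S i) * PI) ^ 2 + / (x - INR (S i) * PI) ^ 2))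
    (x ^ 2 * / sin x ^ 2 - 1).
Proof.
  intros Hx. pose proof PI_RGT_0 as Hpi. pose proof PI_4 as Hpi4.
  set (u := fun m j => x ^ 2 * (/ Mr m ^ 2 / sin ((x + INR j * PI) / Mr m) ^ 2
                              + / Mr m ^ 2 / sin ((x - INR j * PI) / Mr m) ^ 2)).
  set (v := fun j => x ^ 2 * (/ (x + INR j * PI) ^ 2 + / (x - INR j * PI) ^ 2)).
  set (C := x ^ 2 * 9 * (/ PI ^ 2 + / (PI - x) ^ 2)).
  set (w := fun j => C * / INR j ^ 2).
  destruct (inv_sq_series C) as [W HW].
  assert (Hbd : forall m j, (1 <= j <= 2 ^ m - 1)%nat -> Rabs (u m j) <= w j).
  { intros m j Hj. destruct (pair_range x m j Hx Hj) as [[Hp1 Hp2] [Hq1 Hq2]].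
    pose proof (Mr_pos m) as HM.
    assert (Hj1 : 1 <= INR j) by (apply (le_INR 1); lia).
    set (p := (x + INR j * PI) / Mr m) in *. set (q' := (INR j * PI - x) / Mr m) in *.
    assert (Hq : (x - INR j * PI) / Mr m = - q') by (unfold q'; field; lra).
    unfold u. rewrite Hq, sin_neg.
    replace ((- sin q') ^ 2) with (sin q' ^ 2) by ring.
    pose proof (csc_piece_bound (Mr m) p (x + INR j * PI) HM ltac:(lra) ltac:(unfold p; field; lra)) as B1.
    pose proof (csc_piece_bound (Mr m) q' (INR j * PI - x) HM ltac:(lra) ltac:(unfold q'; field; lra)) as B2.
    assert (P1 : 0 <= / Mr m ^ 2 / sin p ^ 2).
    { unfold Rdiv. apply Rmult_le_pos; apply Rlt_le, Rinv_0_lt_compat; apply pow_lt;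
      [lra| pose proof (sin_lin p ltac:(lra)); lra]. }
    assert (P2 : 0 <= / Mr m ^ 2 / sin q' ^ 2).
    { unfold Rdiv. apply Rmult_le_pos; apply Rlt_le, Rinv_0_lt_compat; apply pow_lt;
      [lra| pose proof (sin_lin q' ltac:(lra)); lra]. }
    fold p. rewrite Rabs_pos_eq by (apply Rmult_le_pos; [apply pow2_ge_0| lra]).
    unfold w, C.
    assert (B1' : 9 / (x + INR j * PI) ^ 2 <= 9 * / PI ^ 2 * / INR j ^ 2).
    { replace (9 * / PI ^ 2 * / INR j ^ 2) with (9 / (INR j * PI) ^ 2) by (field; lra).
      unfold Rdiv. apply Rmult_le_compat_l; [lra|].
      apply Rinv_le_contravar; [apply pow_lt; nra|].
      apply pow_incr. nra. }
    assert (B2' : 9 / (INR j * PI - x) ^ 2 <= 9 * / (PI - x) ^ 2 * / INR j ^ 2).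
    { replace (9 * / (PI - x) ^ 2 * / INR j ^ 2) with (9 / (INR j * (PI - x)) ^ 2) by (field; lra).
      unfold Rdiv. apply Rmult_le_compat_l; [lra|].
      apply Rinv_le_contravar; [apply pow_lt; nra|].
      apply pow_incr. nra. }
    replace (x ^ 2 * 9 * (/ PI ^ 2 + / (PI - x) ^ 2) * / INR j ^ 2) with
      (x ^ 2 * (9 * / PI ^ 2 * / INR j ^ 2 + 9 * / (PI - x) ^ 2 * / INR j ^ 2)) by ring.
    apply Rmult_le_compat_l; [apply pow2_ge_0|]. lra. }
  assert (Hcv : forall j, (1 <= j)%nat -> Un_cv (fun m => u m j) (v j)).
  { intros j Hj. unfold u, v. apply cv_const_mult. apply CV_plus.
    - apply cv_csc. assert (0 <= INR j) by apply pos_INR. nra.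
    - apply cv_csc. assert (1 <= INR j) by (apply (le_INR 1); lia). nra. }
  destruct (tannery u v w (fun m => (2 ^ m - 1)%nat) W Hbd HW Hcv L_large) as [V [HV HVcv]].
  assert (Hid : forall m, x ^ 2 * / sin x ^ 2 =
     x ^ 2 * (/ Mr m ^ 2 / sin (x / Mr m) ^ 2) + x ^ 2 * (/ Mr m ^ 2 * / cos (x / Mr m) ^ 2)
     + sum1 (u m) (2 ^ m - 1)%nat).
  { intros m.
    assert (Hcd : forall y, 0 < y < PI / 2 -> (fun z => / sin z ^ 2) y + (fun z => / sin z ^ 2) (y + PI / 2)
                 = 4 * (fun z => / sin z ^ 2) (2 * y)) by (intros; apply csc_dup; assumption).
    rewrite (iter_gen (fun z => / sin z ^ 2) 4 x (S m) Hx ltac:(lra) Hcd) at 1.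
    replace (2 ^ S m - 1)%nat with (2 * (2 ^ m - 1) + 1)%nat by (simpl; pose proof (pow2_nat_pos m); lia).
    rewrite sumf_fold.
    replace (INR (2 ^ S m)%nat) with (Mr m) by (rewrite <- INR_K; reflexivity).
    replace (/ 4 ^ S m) with (/ Mr m ^ 2) by (rewrite four_pow; reflexivity).
    replace (S (2 ^ m - 1)) with (2 ^ m)%nat by (pose proof (pow2_nat_pos m); lia).
    rewrite (sum1_ext (fun j => / sin ((x + INR j * PI) / Mr m) ^ 2 + / sin ((x + INR (2 * (2 ^ m - 1) + 2 - j) * PI) / Mr m) ^ 2)
       (fun j => / sin ((x + INR j * PI) / Mr m) ^ 2 + / sin ((x - INR j * PI) / Mr m) ^ 2)).
    2:{ intros j Hj. f_equal.
        replace ((x + INR (2 * (2 ^ m - 1) + 2 - j) * PI) / Mr m) with ((x - INR j * PI) / Mr m + PI).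
        - rewrite neg_sin. f_equal. ring.
        - rewrite minus_INR by (pose proof (pow2_nat_pos m); lia).
          replace (INR (2 * (2 ^ m - 1) + 2)) with (Mr m) by (rewrite <- INR_K; f_equal; pose proof (pow2_nat_pos m); lia).
          pose proof (Mr_pos m). field. lra. }
    unfold u.
    rewrite (sum1_ext (fun j => x ^ 2 * (/ Mr m ^ 2 / sin ((x + INR j * PI) / Mr m) ^ 2 + / Mr m ^ 2 / sin ((x - INR j * PI) / Mr m) ^ 2))
       (fun j => (x ^ 2 * / Mr m ^ 2) * (/ sin ((x + INR j * PI) / Mr m) ^ 2 + / sin ((x - INR j * PI) / Mr m) ^ 2))) by (intros; unfold Rdiv; ring).
    rewrite sum1_scal.
    replace ((x + INR (2 ^ m) * PI) / Mr m) with (x / Mr m + PI / 2)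
      by (rewrite Mr_K; field; pose proof (pow2_nat_pos m); apply not_0_INR; lia).
    rewrite sin_shift2. replace ((x + INR 0 * PI) / Mr m) with (x / Mr m) by (simpl; field; pose proof (Mr_pos m); lra).
    unfold Rdiv. ring. }
  assert (HA : Un_cv (fun m => x ^ 2 * (/ Mr m ^ 2 / sin (x / Mr m) ^ 2)) 1).
  { replace 1 with (x ^ 2 * / x ^ 2) by (field; lra).
    apply cv_const_mult. apply cv_csc. lra. }
  assert (HB : Un_cv (fun m => x ^ 2 * (/ Mr m ^ 2 * / cos (x / Mr m) ^ 2)) 0).
  { destruct (Mr_large x) as [m0 Hm0].
    apply (cv_geom _ _ (4 * x ^ 2) m0). intros m Hm.
    pose proof (Mr_pos m). pose proof (Mr_ge m). specialize (Hm0 m Hm).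
    assert (1 <= 2 ^ m) by (apply pow_R1_Rle; lra).
    assert (Hz1 : 0 < x / Mr m <= 1).
    { split; [apply Rdiv_lt_0_compat; lra|].
      apply Rmult_le_reg_r with (Mr m); [lra|]. unfold Rdiv. rewrite Rmult_assoc, Rinv_l by lra. lra. }
    pose proof (zsec_bound _ Hz1) as Ht.
    assert (Hc : 0 < cos (x / Mr m)) by (apply cos_gt_0; pose proof PI2_1; lra).
    replace (x ^ 2 * (/ Mr m ^ 2 * / cos (x / Mr m) ^ 2)) with ((x / Mr m / cos (x / Mr m)) ^ 2) by (field; lra).
    rewrite Rminus_0_r, Rabs_pos_eq by lra.
    eapply Rle_trans; [apply Ht|].
    replace (4 * (x / Mr m) ^ 2) with (4 * x ^ 2 / (Mr m * Mr m)) by (field; lra).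
    unfold Rdiv. apply Rmult_le_compat_l; [nra|]. apply Rinv_le_contravar; [apply pow_lt; lra| nra]. }
  pose proof (assemble3 _ _ _ _ _ _ _ Hid HA HB HVcv) as Hfin.
  replace (x ^ 2 * / sin x ^ 2 - 1) with V by lra.
  exact HV.
Qed.

Definition bounded_at (a : nat -> R) (r : R) := exists M, forall n, Rabs (a n * r ^ n) <= M.

Lemma rad_ge a r : bounded_at a r -> Rbar_le r (CV_radius a).
Proof. intros H. destruct (CV_radius_bounded a) as [Hub _]. apply Hub. exact H. Qed.

Lemma rad_lt a r x : bounded_at a r -> Rabs x < r -> Rbar_lt (Rabs x) (CV_radius a).
Proof.
  intros H Hx. pose proof (rad_ge a r H) as Hr.
  destruct (CV_radius a) as [c| |]; simpl in *; try tauto. lra.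
Qed.

Lemma lim0_bounded (u : nat -> R) : is_lim_seq u 0 -> exists M, forall n, Rabs (u n) <= M.
Proof.
  intros H. apply is_lim_seq_spec in H. destruct (H (mkposreal 1 Rlt_0_1)) as [N HN].
  exists (1 + sum_f_R0 (fun k => Rabs (u k)) N). intros n.
  assert (Hnn : forall m, 0 <= sum_f_R0 (fun k => Rabs (u k)) m).
  { induction m; simpl; [apply Rabs_pos| pose proof (Rabs_pos (u (S m))); lra]. }
  destruct (Compare_dec.le_lt_dec N n) as [Hn|Hn].
  - specialize (HN n Hn). simpl in HN. rewrite Rminus_0_r in HN. specialize (Hnn N). lra.
  - assert (Hg : forall N n, (n <= N)%nat -> Rabs (u n) <= sum_f_R0 (fun k => Rabs (u k)) N).
    { clear. intros N. induction N; intros n Hn.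
      - replace n with 0%nat by lia. simpl. lra.
      - assert (Hnn : forall m, 0 <= sum_f_R0 (fun k => Rabs (u k)) m).
        { induction m; simpl; [apply Rabs_pos| pose proof (Rabs_pos (u (S m))); lra]. }
        destruct (Nat.eq_dec n (S N)) as [->|Hne].
        + simpl. specialize (Hnn N). lra.
        + simpl. specialize (IHN n ltac:(lia)). pose proof (Rabs_pos (u (S N))). lra. }
    specialize (Hg N n ltac:(lia)). lra.
Qed.

Lemma ex_bounded a r : ex_series (fun n => a n * r ^ n) -> bounded_at a r.
Proof. intros H. apply lim0_bounded. apply ex_series_lim_0. exact H. Qed.

Lemma bounded_abs a b r : (forall n, Rabs (a n) <= Rabs (b n)) -> bounded_at b r -> bounded_at a r.
Proof.
  intros H [M HM]. exists M. intros n. specialize (HM n). specialize (H n).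
  rewrite Rabs_mult in *. eapply Rle_trans; [|exact HM].
  apply Rmult_le_compat_r; [apply Rabs_pos| exact H].
Qed.

Lemma is_pseries_R (a : nat -> R) x l : is_pseries a x l <-> infinite_sum (fun n => a n * x ^ n) l.
Proof.
  unfold is_pseries. split; intros H.
  - apply is_inf_sum. eapply is_series_ext; [|exact H]. intros n.
    change (scal (pow_n x n) (a n)) with (pow_n x n * a n). rewrite pow_n_pow. simpl. apply Rmult_comm.
  - apply inf_sum_is in H. eapply is_series_ext; [|exact H]. intros n.
    change (scal (pow_n x n) (a n)) with (pow_n x n * a n). rewrite pow_n_pow. simpl. apply Rmult_comm.
Qed.

Lemma ex_pseries_R (a : nat -> R) x : ex_pseries a x <-> ex_series (fun n => a n * x ^ n).
Proof.
  split; intros [l Hl]; exists l.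
  - apply inf_sum_is. apply is_pseries_R. exact Hl.
  - apply is_pseries_R. apply is_inf_sum. exact Hl.
Qed.

Definition s_co (n : nat) : R := (1 - (-1) ^ n) / 2 * / INR (fact n).
Definition c_co (n : nat) : R := (1 + (-1) ^ n) / 2 * / INR (fact n).
Definition r_co (n : nat) : R := INR n * s_co n.
Definition sg (n : nat) : R := (-1) ^ (Nat.div2 n).

Lemma m1_even m : (-1) ^ (2 * m) = 1.
Proof. apply pow_1_even. Qed.
Lemma m1_odd m : (-1) ^ (2 * m + 1) = -1.
Proof. rewrite Nat.add_1_r. apply pow_1_odd. Qed.

Lemma s_even m : s_co (2 * m) = 0.
Proof. unfold s_co. rewrite m1_even. field. apply INR_fact_neq_0. Qed.
Lemma s_odd m : s_co (2 * m + 1) = / INR (fact (2 * m + 1)).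
Proof. unfold s_co. rewrite m1_odd. field. apply INR_fact_neq_0. Qed.

Lemma r_even m : r_co (2 * m) = 0.
Proof. unfold r_co. rewrite s_even. ring. Qed.
Lemma r_odd m : r_co (2 * m + 1) = / INR (fact (2 * m)).
Proof.
  unfold r_co. rewrite s_odd. replace (2 * m + 1)%nat with (S (2 * m)) by lia.
  rewrite fact_simpl, mult_INR. field. split; [apply INR_fact_neq_0| apply not_0_INR; lia].
Qed.

Lemma s_abs n : Rabs (s_co n) <= / INR (fact n).
Proof.
  destruct (Nat.Even_or_Odd n) as [[m ->]|[m ->]].
  - rewrite s_even, Rabs_R0. apply Rlt_le, Rinv_0_lt_compat, INR_fact_lt_0.
  - rewrite s_odd. rewrite Rabs_pos_eq; [lra|]. apply Rlt_le, Rinv_0_lt_compat, INR_fact_lt_0.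
Qed.

Lemma exp_series x : infinite_sum (fun n => / INR (fact n) * x ^ n) (exp x).
Proof. apply is_pseries_R. apply is_exp_Reals. Qed.

Lemma s_series x : infinite_sum (fun n => s_co n * x ^ n) (sinh x).
Proof.
  unfold sinh.
  pose proof (inf_sum_minus _ _ _ _ (exp_series x) (exp_series (- x))) as H.
  pose proof (inf_sum_scal _ _ (/ 2) H) as H2.
  eapply inf_sum_ext; [|replace ((exp x - exp (- x)) / 2) with (/ 2 * (exp x - exp (- x))) by field; exact H2].
  intros n. unfold s_co. replace (- x) with ((-1) * x) by ring. rewrite Rpow_mult_distr. field. apply INR_fact_neq_0.
Qed.

Lemma c_series x : infinite_sum (fun n => c_co n * x ^ n) (cosh x).
Proof.
  unfold cosh.
  pose proof (inf_sum_plus _ _ _ _ (exp_series x) (exp_series (- x))) as H.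
  pose proof (inf_sum_scal _ _ (/ 2) H) as H2.
  eapply inf_sum_ext; [|replace ((exp x + exp (- x)) / 2) with (/ 2 * (exp x + exp (- x))) by field; exact H2].
  intros n. unfold c_co. replace (- x) with ((-1) * x) by ring. rewrite Rpow_mult_distr. field. apply INR_fact_neq_0.
Qed.

Lemma r_c k : r_co (S k) = c_co k.
Proof.
  unfold r_co, s_co, c_co. rewrite fact_simpl, mult_INR. simpl pow.
  assert (INR (fact k) <> 0) by apply INR_fact_neq_0.
  assert (INR (S k) <> 0) by (apply not_0_INR; lia).
  field. split; assumption.
Qed.

Lemma r_series x : infinite_sum (fun n => r_co n * x ^ n) (x * cosh x).
Proof.
  pose proof (c_series x) as H. apply is_pseries_R in H.
  apply is_pseries_incr_1 in H. apply is_pseries_R in H.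
  eapply inf_sum_ext; [|exact H]. intros n. simpl.
  destruct n as [|k].
  - unfold r_co. simpl. unfold zero. simpl. ring.
  - rewrite r_c. simpl. ring.
Qed.

Lemma uniq_coef a b r : 0 < r -> bounded_at a r -> bounded_at b r ->
  (forall y, Rabs y < r -> PSeries a y = PSeries b y) -> forall n, a n = b n.
Proof.
  intros Hr Ha Hb H n. apply PSeries_ext_recip.
  - pose proof (rad_lt a r 0 Ha). rewrite Rabs_R0 in H0. apply H0. exact Hr.
  - pose proof (rad_lt b r 0 Hb). rewrite Rabs_R0 in H0. apply H0. exact Hr.
  - exists (mkposreal r Hr). intros y Hy. apply H.
    unfold ball in Hy; simpl in Hy. unfold AbsRing_ball in Hy. simpl in Hy.
    unfold abs, minus, plus, opp in Hy; simpl in Hy. rewrite Ropp_0, Rplus_0_r in Hy. exact Hy.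
Qed.

Definition p_co (B : nat -> R) (n : nat) : R :=
  B n * 2 ^ n / INR (fact n) + (if Nat.eqb n 1 then 1 else 0).

Lemma ind1_series x : infinite_sum (fun n => (if Nat.eqb n 1 then 1 else 0) * x ^ n) x.
Proof.
  intros e He. exists 1%nat. intros n Hn. unfold Rdist.
  assert (sum_f_R0 (fun n => (if Nat.eqb n 1 then 1 else 0) * x ^ n) n = x).
  { induction Hn.
    - simpl. ring.
    - simpl sum_f_R0. rewrite IHHn. destruct m; [lia|]. simpl. ring. }
  rewrite H, Rminus_eq_0, Rabs_R0. lra.
Qed.

Lemma exp2_ne1 x : x <> 0 -> exp (2 * x) - 1 <> 0.
Proof.
  intros Hx H. assert (exp (2 * x) = exp 0) by (rewrite exp_0; lra).
  apply exp_inv in H0. lra.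
Qed.

Lemma p_series B x : is_bernoulli B -> x <> 0 -> Rabs x < PI ->
  infinite_sum (fun n => p_co B n * x ^ n) (x * (exp (2 * x) + 1) / (exp (2 * x) - 1)).
Proof.
  intros HB Hx Hxp.
  assert (H2x : 2 * x <> 0) by lra.
  assert (H2a : Rabs (2 * x) < 2 * PI) by (rewrite Rabs_mult, Rabs_pos_eq by lra; lra).
  pose proof (HB (2 * x) H2x H2a) as H1.
  pose proof (inf_sum_plus _ _ _ _ H1 (ind1_series x)) as H2.
  replace (x * (exp (2 * x) + 1) / (exp (2 * x) - 1)) with (2 * x / (exp (2 * x) - 1) + x)
    by (field; apply exp2_ne1; exact Hx).
  eapply inf_sum_ext; [|exact H2]. intros n. unfold p_co. rewrite Rpow_mult_distr. field.
  apply INR_fact_neq_0.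
Qed.

Lemma p_bounded B : is_bernoulli B -> bounded_at (p_co B) 1.
Proof.
  intros HB. apply ex_bounded.
  pose proof PI2_1.
  exists (1 * (exp (2 * 1) + 1) / (exp (2 * 1) - 1)).
  apply inf_sum_is. apply p_series; [exact HB| lra| rewrite Rabs_R1; lra].
Qed.

Lemma s_bounded r : bounded_at s_co r.
Proof.
  apply ex_bounded. exists (sinh r). apply inf_sum_is. apply s_series.
Qed.

Lemma r_bounded r : bounded_at r_co r.
Proof.
  apply ex_bounded. exists (r * cosh r). apply inf_sum_is. apply r_series.
Qed.

Lemma PS_val a x l : infinite_sum (fun n => a n * x ^ n) l -> PSeries a x = l.
Proof. intros H. apply is_pseries_unique. apply is_pseries_R. exact H. Qed.

Lemma ps_rs_identity B : is_bernoulli B -> forall n, PS_mult (p_co B) s_co n = r_co n.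
Proof.
  intros HB. pose proof (p_bounded B HB) as Hp.
  assert (Hm : bounded_at (PS_mult (p_co B) s_co) (1/2)).
  { apply ex_bounded. apply ex_pseries_R. apply ex_pseries_mult.
    - apply (rad_lt _ 1 _ Hp). rewrite Rabs_pos_eq; lra.
    - apply (rad_lt _ 1 _ (s_bounded 1)). rewrite Rabs_pos_eq; lra. }
  apply (uniq_coef _ _ (1/2) ltac:(lra) Hm (r_bounded _)).
  intros y Hy.
  destruct (Req_dec y 0) as [->|Hy0].
  - rewrite !PSeries_0. unfold PS_mult, r_co, s_co. simpl. field.
  - rewrite PSeries_mult.
    2:{ apply (rad_lt _ 1 _ Hp). lra. }
    2:{ apply (rad_lt _ 1 _ (s_bounded 1)). lra. }
    pose proof PI2_1.
    rewrite (PS_val _ _ _ (p_series B y HB Hy0 ltac:(lra))).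
    rewrite (PS_val _ _ _ (s_series y)). rewrite (PS_val _ _ _ (r_series y)).
    unfold sinh, cosh. rewrite exp_Ropp.
    replace (2 * y) with (y + y) by ring. rewrite exp_plus.
    assert (He : 0 < exp y) by apply exp_pos.
    assert (He2 : exp y * exp y - 1 <> 0).
    { rewrite <- exp_plus. replace (y + y) with (2 * y) by ring. apply exp2_ne1. exact Hy0. }
    field. split; lra.
Qed.

Lemma sumf_last (f : nat -> R) n : sum_f_R0 f (S n) = sum_f_R0 f n + f (S n).
Proof. reflexivity. Qed.

Lemma s0 : s_co 0 = 0.
Proof. apply (s_even 0). Qed.
Lemma s1 : s_co 1 = 1.
Proof. unfold s_co. simpl. field. Qed.

Lemma rec_at B (HB : is_bernoulli B) n :
  sum_f_R0 (fun k => p_co B k * s_co (S n - k)) n + p_co B (S n) * s_co 0 = r_co (S n).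
Proof.
  rewrite <- (ps_rs_identity B HB (S n)). unfold PS_mult. simpl sum_f_R0 at 2.
  f_equal. f_equal. f_equal. lia.
Qed.

Lemma p0_val B (HB : is_bernoulli B) : p_co B 0 = 1.
Proof.
  pose proof (rec_at B HB 0) as H. simpl in H. rewrite s0, s1 in H.
  unfold r_co in H. rewrite s1 in H. simpl in H. lra.
Qed.

Lemma p_odd B (HB : is_bernoulli B) m : p_co B (2 * m + 1) = 0.
Proof.
  induction m as [m IH] using lt_wf_ind.
  pose proof (rec_at B HB (2 * m + 1)) as H.
  rewrite s0, Rmult_0_r, Rplus_0_r in H.
  replace (S (2 * m + 1)) with (2 * (m + 1))%nat in H by lia. rewrite r_even in H.
  replace (2 * m + 1)%nat with (S (2 * m)) in H by lia.
  rewrite sumf_last in H. replace (2 * (m + 1) - S (2 * m))%nat with 1%nat in H by lia.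
  rewrite s1 in H.
  rewrite (sum_eq_R0 (fun k => p_co B k * s_co (2 * (m + 1) - k))) in H.
  - replace (S (2 * m)) with (2 * m + 1)%nat in H by lia. lra.
  - intros k Hk. destruct (Nat.Even_or_Odd k) as [[a ->]|[a ->]].
    + replace (2 * (m + 1) - 2 * a)%nat with (2 * (m + 1 - a))%nat by lia.
      rewrite s_even. ring.
    + rewrite IH by lia. ring.
Qed.

Definition q_co B n := sg n * p_co B n.
Definition sig_co n := sg n * s_co n.
Definition rho_co n := sg n * r_co n.

Lemma sg_abs n : Rabs (sg n) = 1.
Proof. unfold sg. apply pow_1_abs. Qed.

Lemma sg_even a : sg (2 * a) = (-1) ^ a.
Proof. unfold sg. rewrite Nat.div2_double. reflexivity. Qed.
Lemma sg_odd a : sg (2 * a + 1) = (-1) ^ a.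
Proof. unfold sg. rewrite Nat.div2_odd'. reflexivity. Qed.

Lemma q_sig_rho B (HB : is_bernoulli B) n : PS_mult (q_co B) sig_co n = rho_co n.
Proof.
  unfold rho_co. rewrite <- (ps_rs_identity B HB n). unfold PS_mult.
  rewrite <- sumf_scal. apply sum_eq. intros k Hk.
  unfold q_co, sig_co.
  destruct (Nat.Even_or_Odd k) as [[a ->]|[a ->]].
  - destruct (Nat.Even_or_Odd (n - 2 * a)) as [[b Hb]|[b Hb]].
    + rewrite Hb, s_even. ring.
    + rewrite Hb. replace n with (2 * (a + b) + 1)%nat by lia.
      rewrite sg_even, sg_odd, sg_odd, pow_add. ring.
  - rewrite (p_odd B HB a). ring.
Qed.

Lemma inf_sum_zero : infinite_sum (fun _ => 0) 0.
Proof.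
  intros e He. exists 0%nat. intros m _. unfold Rdist.
  assert (sum_f_R0 (fun _ => 0) m = 0) by (induction m; simpl; lra).
  rewrite H. rewrite Rminus_0_r, Rabs_R0. lra.
Qed.

Lemma ex_pseries_zero (a : nat -> R) y : (forall n, a n = 0) -> ex_pseries a y /\ PSeries a y = 0.
Proof.
  intros H. assert (Hs : infinite_sum (fun n => a n * y ^ n) 0).
  { eapply inf_sum_ext; [|exact inf_sum_zero]. intros n. rewrite H. ring. }
  split.
  - apply ex_pseries_R. exists 0. apply inf_sum_is. exact Hs.
  - apply PS_val. exact Hs.
Qed.

Lemma sig_sin x : PSeries sig_co x = sin x.
Proof.
  unfold sin. destruct (exist_sin (Rsqr x)) as [l Hl]. unfold sin_in in Hl.
  assert (He : forall n, sig_co (2 * n) = 0) by (intros n; unfold sig_co; rewrite s_even; ring).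
  assert (Ho : infinite_sum (fun n => sig_co (2 * n + 1) * (x ^ 2) ^ n) l).
  { eapply inf_sum_ext; [|exact Hl]. intros n. unfold sig_co. rewrite sg_odd, s_odd.
    unfold sin_n, Rsqr. replace (x ^ 2) with (x * x) by ring. field. apply INR_fact_neq_0. }
  destruct (ex_pseries_zero (fun n => sig_co (2 * n)) (x ^ 2) He) as [E1 E2].
  rewrite PSeries_odd_even; [| exact E1| apply ex_pseries_R; exists l; apply inf_sum_is; exact Ho].
  rewrite E2, (PS_val _ _ _ Ho). ring.
Qed.

Lemma rho_xcos x : PSeries rho_co x = x * cos x.
Proof.
  unfold cos. destruct (exist_cos (Rsqr x)) as [l Hl]. unfold cos_in in Hl.
  assert (He : forall n, rho_co (2 * n) = 0) by (intros n; unfold rho_co; rewrite r_even; ring).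
  assert (Ho : infinite_sum (fun n => rho_co (2 * n + 1) * (x ^ 2) ^ n) l).
  { eapply inf_sum_ext; [|exact Hl]. intros n. unfold rho_co. rewrite sg_odd, r_odd.
    unfold cos_n, Rsqr. replace (x ^ 2) with (x * x) by ring. field. apply INR_fact_neq_0. }
  destruct (ex_pseries_zero (fun n => rho_co (2 * n)) (x ^ 2) He) as [E1 E2].
  rewrite PSeries_odd_even; [| exact E1| apply ex_pseries_R; exists l; apply inf_sum_is; exact Ho].
  rewrite E2, (PS_val _ _ _ Ho). ring.
Qed.

Lemma q_bounded B (HB : is_bernoulli B) : bounded_at (q_co B) 1.
Proof.
  apply (bounded_abs _ (p_co B)); [|apply p_bounded; exact HB].
  intros n. unfold q_co. rewrite Rabs_mult, sg_abs. lra.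
Qed.

Lemma sig_bounded : bounded_at sig_co 1.
Proof.
  apply (bounded_abs _ s_co); [|apply s_bounded].
  intros n. unfold sig_co. rewrite Rabs_mult, sg_abs. lra.
Qed.

Lemma q_cot B (HB : is_bernoulli B) x : 0 < x < 1 -> PSeries (q_co B) x = x * ct x.
Proof.
  intros Hx.
  assert (H1 : PSeries (PS_mult (q_co B) sig_co) x = PSeries (q_co B) x * PSeries sig_co x).
  { apply PSeries_mult.
    - apply (rad_lt _ 1 _ (q_bounded B HB)). rewrite Rabs_pos_eq; lra.
    - apply (rad_lt _ 1 _ sig_bounded). rewrite Rabs_pos_eq; lra. }
  rewrite (PSeries_ext _ _ _ (q_sig_rho B HB)) in H1.
  rewrite rho_xcos, sig_sin in H1.
  assert (Hs : 0 < sin x) by (apply sin_gt_0; pose proof PI2_1; lra).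
  unfold ct. apply Rmult_eq_reg_r with (sin x); [|lra]. rewrite <- H1. field. lra.
Qed.

Lemma lim_at0 (f : R -> R) L C r : 0 < r -> continuity_pt f 0 ->
  (forall t, 0 < t < r -> Rabs (f t - L) <= C * t ^ 2) -> f 0 = L.
Proof.
  intros Hr Hc H. apply Rminus_diag_uniq. apply Rabs_eq_0.
  apply Rle_antisym; [|apply Rabs_pos].
  apply le_epsilon. intros eps Heps.
  destruct (Hc (eps / 2) ltac:(lra)) as [alp [Halp Hf]].
  set (C' := Rabs C + 1).
  set (t := Rmin (Rmin (alp / 2) (r / 2)) (Rmin 1 (eps / (2 * C')))).
  assert (HC' : 0 < C') by (unfold C'; pose proof (Rabs_pos C); lra).
  assert (Ht0 : 0 < t).
  { unfold t. repeat apply Rmin_glb_lt; try lra. apply Rdiv_lt_0_compat; lra. }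
  assert (Ht1 : t <= alp / 2) by (unfold t; eapply Rle_trans; [apply Rmin_l| apply Rmin_l]).
  assert (Ht2 : t <= r / 2) by (unfold t; eapply Rle_trans; [apply Rmin_l| apply Rmin_r]).
  assert (Ht3 : t <= 1) by (unfold t; eapply Rle_trans; [apply Rmin_r| apply Rmin_l]).
  assert (Ht4 : t <= eps / (2 * C')) by (unfold t; eapply Rle_trans; [apply Rmin_r| apply Rmin_r]).
  specialize (Hf t). simpl in Hf. unfold R_dist in Hf.
  assert (Hft : Rabs (f t - f 0) < eps / 2).
  { apply Hf. split; [split; [exact I| lra]|]. rewrite Rminus_0_r, Rabs_pos_eq; lra. }
  specialize (H t ltac:(lra)).
  assert (C * t ^ 2 <= eps / 2).
  { assert (C * t ^ 2 <= C' * t).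
    { unfold C'. pose proof (Rle_abs C). pose proof (Rabs_pos C).
      assert (Ht2' : 0 <= t ^ 2 <= t) by (simpl; nra).
      assert (C * t ^ 2 <= Rabs C * t ^ 2) by (apply Rmult_le_compat_r; lra).
      assert (Rabs C * t ^ 2 <= Rabs C * t) by (apply Rmult_le_compat_l; lra).
      nra. }
    assert (C' * t <= C' * (eps / (2 * C'))) by (apply Rmult_le_compat_l; lra).
    replace (C' * (eps / (2 * C'))) with (eps / 2) in H1 by (field; lra). lra. }
  replace (f 0 - L) with ((f t - L) - (f t - f 0)) by ring.
  eapply Rle_trans; [apply Rabs_triang|]. rewrite Rabs_Ropp. lra.
Qed.

Definition aa (i : nat) : R := (INR (S i) * PI) ^ 2.

Lemma aa_ge i : INR (S i) ^ 2 <= aa i /\ 9 <= aa i.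
Proof.
  unfold aa. assert (1 <= INR (S i)) by (apply (le_INR 1); lia).
  assert (3 < PI) by (pose proof PI2_3_2; lra).
  rewrite Rpow_mult_distr. set (y := INR (S i)) in *.
  assert (1 <= y ^ 2) by (replace (y ^ 2) with (y * y) by ring; nra).
  assert (9 <= PI ^ 2) by (replace (PI ^ 2) with (PI * PI) by ring; nra).
  split; nra.
Qed.

Lemma aa_pow_ge i n : (1 <= n)%nat -> aa i <= aa i ^ n.
Proof.
  intros Hn. destruct (aa_ge i) as [_ H9].
  induction Hn; [simpl; lra|]. simpl. nra.
Qed.

Lemma zeta_ex n : (1 <= n)%nat -> ex_series (fun i => / aa i ^ n).
Proof.
  intros Hn. apply (@ex_series_le R_AbsRing R_CompleteNormedModule _ (fun i => / INR (S i) ^ 2)); [|apply inv_sq_ex].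
  intros i. change (Rabs (/ aa i ^ n) <= / INR (S i) ^ 2).
  destruct (aa_ge i) as [H1 H9]. pose proof (aa_pow_ge i n Hn).
  assert (0 < INR (S i) ^ 2) by (apply pow_lt; apply lt_0_INR; lia).
  rewrite Rabs_pos_eq by (apply Rlt_le, Rinv_0_lt_compat; lra).
  apply Rinv_le_contravar; lra.
Qed.

Definition Zeta n := Series (fun i => / aa i ^ n).

Lemma zeta_sum n : (1 <= n)%nat -> infinite_sum (fun i => / aa i ^ n) (Zeta n).
Proof.
  intros Hn. apply is_inf_sum. apply Series_correct. apply zeta_ex. exact Hn.
Qed.

Lemma aa_inv_pos i n : 0 < / aa i ^ n.
Proof. destruct (aa_ge i). apply Rinv_0_lt_compat, pow_lt; lra. Qed.

Lemma zeta_pos n : (1 <= n)%nat -> 0 < Zeta n.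
Proof.
  intros Hn.
  assert (Hnn : forall i, 0 <= / aa i ^ n) by (intros; apply Rlt_le, aa_inv_pos).
  pose proof (inf_sum_ge_first _ _ Hnn (zeta_sum n Hn)).
  pose proof (aa_inv_pos 0 n). simpl in H. lra.
Qed.

Lemma geom_fin (a t2 : R) k : 0 < t2 < a ->
  t2 / (a - t2) = sum1 (fun m => t2 ^ m / a ^ m) k + t2 ^ (S k) / (a ^ k * (a - t2)).
Proof.
  intros H. induction k.
  - simpl. field. lra.
  - rewrite IHk. simpl sum1. assert (0 < a ^ k) by (apply pow_lt; lra).
    simpl. field. lra.
Qed.

Lemma even_sum (f : nat -> R) k : (forall m, f (2 * m + 1)%nat = 0) ->
  sum_f_R0 f (2 * k + 1) = sum_f_R0 (fun m => f (2 * m)%nat) k.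
Proof.
  intros H. induction k.
  - simpl. specialize (H 0%nat). simpl in H. rewrite H. ring.
  - replace (2 * S k + 1)%nat with (S (S (2 * k + 1))) by lia.
    rewrite (sumf_last f (S (2 * k + 1))), (sumf_last f (2 * k + 1)), IHk.
    rewrite (sumf_last (fun m => f (2 * m)%nat) k).
    replace (S (S (2 * k + 1))) with (2 * S k + 1)%nat by lia. rewrite H.
    replace (S (2 * k + 1)) with (2 * S k)%nat by lia. ring.
Qed.

Lemma sumf_sum1 (g : nat -> R) k : sum_f_R0 g k = g 0%nat + sum1 g k.
Proof. induction k; simpl; [ring| rewrite IHk; ring]. Qed.

Lemma q_odd B (HB : is_bernoulli B) m : q_co B (2 * m + 1) = 0.
Proof. unfold q_co. rewrite (p_odd B HB m). ring. Qed.

Lemma q0 B (HB : is_bernoulli B) : q_co B 0 = 1.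
Proof. unfold q_co. rewrite (p0_val B HB). unfold sg. simpl. ring. Qed.

Lemma q_zeta B (HB : is_bernoulli B) n : (1 <= n)%nat -> q_co B (2 * n) = -2 * Zeta n.
Proof.
  induction n as [n IH] using lt_wf_ind. intros Hn.
  destruct n as [|k]; [lia|]. clear Hn.
  set (a := PS_decr_n (q_co B) (2 * S k)).
  assert (Hex : forall t, Rabs t < 1 -> ex_pseries (q_co B) t).
  { intros t Ht. apply CV_radius_inside. apply (rad_lt _ 1 _ (q_bounded B HB)). exact Ht. }
  assert (Hcont : continuity_pt (PSeries a) 0).
  { apply PSeries_continuity. apply (rad_lt _ (1/2)); [|rewrite Rabs_R0; lra].
    apply ex_bounded. apply ex_pseries_R. unfold a. apply ex_pseries_decr_n.
    - right. exists 2. unfold mult, one; simpl. field.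
    - apply Hex. rewrite Rabs_pos_eq; lra. }
  assert (Hkey : forall t, 0 < t < 1 -> Rabs (PSeries a t - (-2 * Zeta (S k))) <= (4 * Zeta (S (S k))) * t ^ 2).
  { intros t Ht.
    assert (Ht2 : 0 < t ^ 2 < 1) by (split; [apply pow_lt; lra| simpl; nra]).
    assert (Haa : forall i, t ^ 2 < aa i) by (intros i; destruct (aa_ge i); lra).
    pose proof (PSeries_decr_n (q_co B) (2 * S k - 1) t (Hex t ltac:(rewrite Rabs_pos_eq; lra))) as E1.
    replace (S (2 * S k - 1)) with (2 * S k)%nat in E1 by lia. fold a in E1.
    replace (2 * S k - 1)%nat with (2 * k + 1)%nat in E1 by lia.
    rewrite (even_sum (fun j => q_co B j * t ^ j)) in E1 by (intros m; rewrite q_odd by exact HB; ring).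
    rewrite sumf_sum1 in E1. rewrite q0 in E1 by exact HB. simpl pow in E1 at 1.
    rewrite (sum1_ext _ (fun m => -2 * ((t ^ 2) ^ m * Zeta m))) in E1.
    2:{ intros m Hm. rewrite IH by lia. rewrite <- pow_mult. ring. }
    rewrite sum1_scal in E1.
    rewrite (q_cot B HB t Ht) in E1.
    pose proof (pf_cot t ltac:(pose proof PI2_1; lra)) as P.
    assert (P2 : infinite_sum (fun i => t ^ 2 / (aa i - t ^ 2)) (- (t * ct t - 1) / 2)).
    { pose proof (inf_sum_scal _ _ (- / 2) P) as P'.
      eapply inf_sum_ext; [|replace (- (t * ct t - 1) / 2) with (- / 2 * (t * ct t - 1)) by field; exact P'].
      intros i. unfold aa. assert (0 <= INR i) by apply pos_INR.
      assert (Hp : 3 < PI) by (pose proof PI2_3_2; lra).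
      rewrite S_INR. field. split; [|split]; nra. }
    assert (Fam : infinite_sum (fun i => sum1 (fun m => (t ^ 2) ^ m / aa i ^ m) k)
                    (sum1 (fun m => (t ^ 2) ^ m * Zeta m) k)).
    { apply (inf_sum_sum1 (fun m i => (t ^ 2) ^ m / aa i ^ m)). intros m Hm.
      pose proof (inf_sum_scal _ _ ((t ^ 2) ^ m) (zeta_sum m ltac:(lia))) as Z.
      eapply inf_sum_ext; [|exact Z]. intros i. unfold Rdiv. ring. }
    pose proof (inf_sum_minus _ _ _ _ P2 Fam) as P3.
    assert (P4 : infinite_sum (fun i => / (aa i ^ k * (aa i - t ^ 2)))
                   ((- (t * ct t - 1) / 2 - sum1 (fun m => (t ^ 2) ^ m * Zeta m) k) / (t ^ 2) ^ (S k))).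
    { pose proof (inf_sum_scal _ _ (/ (t ^ 2) ^ (S k)) P3) as P5.
      eapply inf_sum_ext; [|unfold Rdiv; rewrite Rmult_comm; exact P5].
      intros i. cbv beta. rewrite (geom_fin (aa i) (t ^ 2) k) by (split; [lra| apply Haa]).
      assert (0 < aa i ^ k) by (apply pow_lt; destruct (aa_ge i); lra).
      assert (0 < (t ^ 2) ^ S k) by (apply pow_lt; lra).
      specialize (Haa i). field. repeat split; lra. }
    assert (HPa : PSeries a t = -2 * ((- (t * ct t - 1) / 2 - sum1 (fun m => (t ^ 2) ^ m * Zeta m) k) / (t ^ 2) ^ (S k))).
    { assert (Htk : 0 < t ^ S (2 * S k)) by (apply pow_lt; lra).
      replace (t ^ (2 * S k)) with ((t ^ 2) ^ (S k)) in E1 by (rewrite <- pow_mult; reflexivity).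
      assert (0 < (t ^ 2) ^ S k) by (apply pow_lt; lra).
      apply Rmult_eq_reg_l with ((t ^ 2) ^ S k); [|lra].
      replace ((t ^ 2) ^ S k * PSeries a t) with (t * ct t - 1 - -2 * sum1 (fun m : nat => (t ^ 2) ^ m * Zeta m) k) by lra.
      field. lra. }
    pose proof (inf_sum_minus _ _ _ _ P4 (zeta_sum (S k) ltac:(lia))) as D.
    set (G := (- (t * ct t - 1) / 2 - sum1 (fun m => (t ^ 2) ^ m * Zeta m) k) / (t ^ 2) ^ S k) in *.
    assert (Hterm : forall i, 0 <= / (aa i ^ k * (aa i - t ^ 2)) - / aa i ^ S k
                         <= 2 * t ^ 2 * / aa i ^ S (S k)).
    { intros i. destruct (aa_ge i) as [_ H9]. specialize (Haa i).
      assert (0 < aa i ^ k) by (apply pow_lt; lra).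
      replace (/ (aa i ^ k * (aa i - t ^ 2)) - / aa i ^ S k) with (t ^ 2 / (aa i ^ S k * (aa i - t ^ 2)))
        by (simpl; field; lra).
      split.
      - apply Rlt_le, Rdiv_lt_0_compat; [lra|]. apply Rmult_lt_0_compat; [simpl; nra| lra].
      - assert (0 < aa i ^ S k) by (apply pow_lt; lra).
        replace (2 * t ^ 2 * / aa i ^ S (S k)) with (t ^ 2 * / (aa i ^ S k * (aa i / 2))) by (simpl; field; lra).
        unfold Rdiv. apply Rmult_le_compat_l; [lra|].
        apply Rinv_le_contravar; [apply Rmult_lt_0_compat; lra|].
        apply Rmult_le_compat_l; lra. }
    assert (Dlo : 0 <= G - Zeta (S k)).
    { apply (inf_sum_nonneg _ _ (fun i => proj1 (Hterm i)) D). }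
    assert (Dhi : G - Zeta (S k) <= 2 * t ^ 2 * Zeta (S (S k))).
    { apply (inf_sum_le _ _ _ _ (fun i => proj2 (Hterm i)) D).
      apply inf_sum_scal. apply zeta_sum. lia. }
    rewrite HPa. rewrite Rabs_left1 by lra. lra. }
  pose proof (lim_at0 (PSeries a) (-2 * Zeta (S k)) (4 * Zeta (S (S k))) 1 ltac:(lra) Hcont Hkey) as L.
  rewrite PSeries_0 in L. unfold a, PS_decr_n in L. rewrite Nat.add_0_r in L. exact L.
Qed.

Lemma bern_zeta B (HB : is_bernoulli B) n : (1 <= n)%nat ->
  Rabs (B (2 * n)%nat) * 2 ^ (2 * n) / INR (fact (2 * n)) = 2 * Zeta n.
Proof.
  intros Hn. pose proof (q_zeta B HB n Hn) as H.
  unfold q_co, p_co in H. rewrite sg_even in H.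
  replace (Nat.eqb (2 * n) 1) with false in H by (symmetry; apply Nat.eqb_neq; lia).
  rewrite Rplus_0_r in H.
  apply (f_equal Rabs) in H. rewrite Rabs_mult, pow_1_abs, Rmult_1_l in H.
  replace (Rabs (-2 * Zeta n)) with (2 * Zeta n) in H.
  2:{ pose proof (zeta_pos n Hn). rewrite Rabs_left; lra. }
  rewrite <- H. unfold Rdiv. rewrite !Rabs_mult.
  rewrite (Rabs_pos_eq (2 ^ (2 * n))) by (apply pow_le; lra).
  rewrite (Rabs_pos_eq (/ INR (fact (2 * n)))) by (apply Rlt_le, Rinv_0_lt_compat, INR_fact_lt_0).
  reflexivity.
Qed.

Lemma coefB_zeta B (HB : is_bernoulli B) j : coefB B j = 4 * INR j * Zeta (S j).
Proof.
  unfold coefB. pose proof (bern_zeta B HB (S j) ltac:(lia)) as H.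
  replace (2 * S j)%nat with (2 * j + 2)%nat in H by lia.
  replace (2 ^ (2 * j + 3)) with (2 * 2 ^ (2 * j + 2)) by (replace (2 * j + 3)%nat with (S (2 * j + 2)) by lia; reflexivity).
  set (X := 2 ^ (2 * j + 2)) in *. set (Y := Rabs (B (2 * j + 2)%nat)) in *.
  set (Z := INR (fact (2 * j + 2))) in *.
  transitivity (2 * INR j * (Y * X / Z)); [unfold Rdiv; ring|].
  rewrite H. ring.
Qed.

Lemma tan_ct t : t / tan t = t * ct t.
Proof. unfold tan, ct, Rdiv. rewrite Rinv_mult, Rinv_inv. ring. Qed.

Lemma pf_F t : 0 < t < PI ->
  infinite_sum (fun i => 4 * t ^ 4 / (aa i - t ^ 2) ^ 2) ((t / sin t) ^ 2 + t / tan t - 2).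
Proof.
  intros Ht.
  pose proof (inf_sum_plus _ _ _ _ (pf_cot t Ht) (pf_csc t Ht)) as H.
  assert (Hs : 0 < sin t) by (apply sin_gt_0; lra).
  replace ((t / sin t) ^ 2 + t / tan t - 2) with (t * ct t - 1 + (t ^ 2 * / sin t ^ 2 - 1))
    by (rewrite tan_ct; field; lra).
  eapply inf_sum_ext; [|exact H]. intros i. cbv beta. unfold aa.
  set (b := INR (S i) * PI).
  assert (Hb : t < b).
  { unfold b. assert (1 <= INR (S i)) by (apply (le_INR 1); lia). pose proof PI_RGT_0. nra. }
  field. repeat split; nra.
Qed.

Definition phi (M : nat) (x : R) : R := INR M / (1 - x) + / (1 - x) ^ 2.

Lemma phi_identity M x : x <> 1 ->
  x ^ 2 / (1 - x) ^ 2 - sum1 (fun j => INR j * x ^ (j + 1)) M = x ^ (M + 2) * phi M x.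
Proof.
  intros Hx. unfold phi. induction M.
  - simpl. field. lra.
  - assert (E : x ^ 2 / (1 - x) ^ 2 - sum1 (fun j => INR j * x ^ (j + 1)) (S M)
               = (x ^ 2 / (1 - x) ^ 2 - sum1 (fun j => INR j * x ^ (j + 1)) M) - INR (S M) * x ^ (S M + 1))
      by (simpl; ring).
    rewrite E, IHM. rewrite S_INR.
    replace (S M + 1)%nat with (M + 2)%nat by lia.
    replace (S M + 2)%nat with (S (M + 2)) by lia. simpl pow.
    field. lra.
Qed.

Lemma xpow t a k : (t ^ 2 / a) ^ k = t ^ (2 * k) / a ^ k.
Proof. unfold Rdiv. rewrite Rpow_mult_distr, pow_mult, pow_inv. reflexivity. Qed.

Lemma Fdiff_series B (HB : is_bernoulli B) M t : 0 < t < PI ->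
  infinite_sum (fun i => 4 * phi M (t ^ 2 / aa i) / aa i ^ (M + 2))
    (Fdiff B (S M) t / t ^ (2 * S M + 2)).
Proof.
  intros Ht.
  assert (Fam : infinite_sum (fun i => sum1 (fun j => 4 * INR j * t ^ (2 * j + 2) / aa i ^ (j + 1)) M)
                  (sum1 (fun j => coefB B j * t ^ (2 * j + 2)) M)).
  { apply (inf_sum_sum1 (fun j i => 4 * INR j * t ^ (2 * j + 2) / aa i ^ (j + 1))).
    intros j Hj. rewrite coefB_zeta by exact HB.
    pose proof (inf_sum_scal _ _ (4 * INR j * t ^ (2 * j + 2)) (zeta_sum (S j) ltac:(lia))) as Z.
    eapply inf_sum_ext; [|replace (4 * INR j * Zeta (S j) * t ^ (2 * j + 2)) with (4 * INR j * t ^ (2 * j + 2) * Zeta (S j)) by ring; exact Z].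
    intros i. cbv beta. replace (j + 1)%nat with (S j) by lia. unfold Rdiv. ring. }
  pose proof (inf_sum_minus _ _ _ _ (pf_F t Ht) Fam) as D.
  pose proof (inf_sum_scal _ _ (/ t ^ (2 * S M + 2)) D) as D2.
  assert (Ht0 : 0 < t ^ (2 * S M + 2)) by (apply pow_lt; lra).
  replace (Fdiff B (S M) t / t ^ (2 * S M + 2)) with
    (/ t ^ (2 * S M + 2) * ((t / sin t) ^ 2 + t / tan t - 2 - sum1 (fun j => coefB B j * t ^ (2 * j + 2)) M)).
  2:{ unfold Fdiff. replace (S M - 1)%nat with M by lia. unfold Rdiv. ring. }
  eapply inf_sum_ext; [|exact D2]. intros i. cbv beta.
  destruct (aa_ge i) as [_ H9].
  assert (Hta : t ^ 2 < aa i).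
  { unfold aa. assert (1 <= INR (S i)) by (apply (le_INR 1); lia). pose proof PI_RGT_0.
    rewrite Rpow_mult_distr. assert (t ^ 2 < PI ^ 2) by (simpl; nra).
    assert (1 <= INR (S i) ^ 2) by (apply pow_R1_Rle; lra). nra. }
  set (x := t ^ 2 / aa i).
  assert (Hx1 : x <> 1) by (unfold x; intro Hx; apply Rmult_eq_compat_r with (r := aa i) in Hx;
     unfold Rdiv in Hx; rewrite Rmult_assoc, Rinv_l, Rmult_1_r, Rmult_1_l in Hx by lra; lra).
  pose proof (phi_identity M x Hx1) as PI1.
  assert (E1 : 4 * t ^ 4 / (aa i - t ^ 2) ^ 2 = 4 * (x ^ 2 / (1 - x) ^ 2)).
  { unfold x. field. split; lra. }
  assert (E2 : sum1 (fun j => 4 * INR j * t ^ (2 * j + 2) / aa i ^ (j + 1)) M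
             = 4 * sum1 (fun j => INR j * x ^ (j + 1)) M).
  { rewrite <- sum1_scal. apply sum1_ext. intros j Hj. unfold x. rewrite xpow.
    replace (2 * (j + 1))%nat with (2 * j + 2)%nat by lia. field.
    apply pow_nonzero. lra. }
  rewrite E1, E2.
  replace (4 * (x ^ 2 / (1 - x) ^ 2) - 4 * sum1 (fun j : nat => INR j * x ^ (j + 1)) M)
    with (4 * (x ^ 2 / (1 - x) ^ 2 - sum1 (fun j : nat => INR j * x ^ (j + 1)) M)) by ring.
  rewrite PI1. unfold x at 1. rewrite xpow.
  replace (2 * (M + 2))%nat with (2 * S M + 2)%nat by lia.
  field. split; [apply pow_nonzero; lra| lra].
Qed.

Lemma phi_gt M x : 0 < x < 1 -> INR (S M) < phi M x.
Proof.
  intros Hx. unfold phi. rewrite S_INR. pose proof (pos_INR M).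
  assert (INR M <= INR M / (1 - x)).
  { apply Rmult_le_reg_r with (1 - x); [lra|]. unfold Rdiv.
    rewrite Rmult_assoc, Rinv_l, Rmult_1_r by lra. nra. }
  assert (1 < / (1 - x) ^ 2).
  { assert (H2 : / 1 < / (1 - x) ^ 2).
    { assert (Hq : 0 < (1 - x) ^ 2 < 1) by (split; [apply pow_lt; lra| replace ((1 - x) ^ 2) with ((1 - x) * (1 - x)) by ring; nra]).
      apply Rinv_lt_contravar; [lra| lra]. }
    rewrite Rinv_1 in H2. exact H2. }
  lra.
Qed.

Lemma phi_lt M x y : 0 <= x -> x < y -> y < 1 -> phi M x < phi M y.
Proof.
  intros Hx Hxy Hy. unfold phi. pose proof (pos_INR M).
  assert (INR M / (1 - x) <= INR M / (1 - y)).
  { unfold Rdiv. apply Rmult_le_compat_l; [lra|]. apply Rinv_le_contravar; lra. }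
  assert (/ (1 - x) ^ 2 < / (1 - y) ^ 2).
  { apply Rinv_lt_contravar; [apply Rmult_lt_0_compat; apply pow_lt; lra|]. simpl. nra. }
  lra.
Qed.

Lemma phi_lin0 M x : 0 <= x <= 1 / 4 -> phi M x - INR (S M) <= 4 * INR (S M) * x.
Proof.
  intros Hx. unfold phi. rewrite S_INR. pose proof (pos_INR M).
  replace (INR M / (1 - x) + / (1 - x) ^ 2 - (INR M + 1))
    with (INR M * x / (1 - x) + x * (2 - x) / (1 - x) ^ 2) by (field; lra).
  assert (A1 : INR M * x / (1 - x) <= INR M * x * (4 / 3)).
  { unfold Rdiv. apply Rmult_le_compat_l; [nra|].
    replace (4 * / 3) with (/ (3 / 4)) by field. apply Rinv_le_contravar; lra. }
  assert (A2 : x * (2 - x) / (1 - x) ^ 2 <= x * 2 * (16 / 9)).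
  { unfold Rdiv. apply Rmult_le_compat; [nra| apply Rlt_le, Rinv_0_lt_compat, pow_lt; lra| nra|].
    replace (16 * / 9) with (/ (9 / 16)) by field. apply Rinv_le_contravar; [lra|]. simpl. nra. }
  nra.
Qed.

Lemma phi_lip M x y : 0 <= x -> x <= y -> y <= 1 / 4 -> phi M y - phi M x <= 8 * INR (S M) * (y - x).
Proof.
  intros Hx Hxy Hy. unfold phi. rewrite S_INR. pose proof (pos_INR M).
  replace (INR M / (1 - y) + / (1 - y) ^ 2 - (INR M / (1 - x) + / (1 - x) ^ 2))
    with ((y - x) * (INR M / ((1 - x) * (1 - y)) + (2 - x - y) / ((1 - x) ^ 2 * (1 - y) ^ 2))) by (field; lra).
  replace (8 * (INR M + 1) * (y - x)) with ((y - x) * (8 * INR M + 8)) by ring.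
  apply Rmult_le_compat_l; [lra|].
  assert (A1 : INR M / ((1 - x) * (1 - y)) <= INR M * 2).
  { unfold Rdiv. apply Rmult_le_compat_l; [lra|].
    replace 2 with (/ (1 / 2)) by field. apply Rinv_le_contravar; [nra|]. nra. }
  assert (A2 : (2 - x - y) / ((1 - x) ^ 2 * (1 - y) ^ 2) <= 2 * 4).
  { unfold Rdiv. apply Rmult_le_compat; [lra| apply Rlt_le, Rinv_0_lt_compat; apply Rmult_lt_0_compat; apply pow_lt; lra| lra|].
    replace 4 with (/ (1 / 4)) by field. apply Rinv_le_contravar; [lra|].
    assert ((3/4)^2 <= (1 - x) ^ 2) by (apply pow_incr; lra).
    assert ((3/4)^2 <= (1 - y) ^ 2) by (apply pow_incr; lra).
    assert (0 <= (3/4)^2) by (apply pow_le; lra).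
    assert ((3/4)^2 * (3/4)^2 <= (1 - x) ^ 2 * (1 - y) ^ 2) by (apply Rmult_le_compat; lra).
    simpl in *. lra. }
  lra.
Qed.

Lemma lim_right0 lam L C r : 0 < r -> (forall t, 0 < t < r -> lam < L + C * t ^ 2) -> lam <= L.
Proof.
  intros Hr H. destruct (Rle_or_lt lam L) as [|Hl]; [assumption|]. exfalso.
  set (C' := Rabs C + 1).
  assert (HC' : 0 < C') by (unfold C'; pose proof (Rabs_pos C); lra).
  set (t := Rmin (Rmin (r / 2) 1) ((lam - L) / (2 * C'))).
  assert (Ht0 : 0 < t) by (unfold t; repeat apply Rmin_glb_lt; try lra; apply Rdiv_lt_0_compat; lra).
  assert (Ht1 : t <= r / 2) by (unfold t; eapply Rle_trans; [apply Rmin_l| apply Rmin_l]).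
  assert (Ht2 : t <= 1) by (unfold t; eapply Rle_trans; [apply Rmin_l| apply Rmin_r]).
  assert (Ht3 : t <= (lam - L) / (2 * C')) by (unfold t; apply Rmin_r).
  specialize (H t ltac:(lra)).
  assert (C * t ^ 2 <= C' * t).
  { unfold C'. pose proof (Rle_abs C). pose proof (Rabs_pos C).
    assert (Ht2' : 0 <= t ^ 2 <= t) by (simpl; nra).
    assert (C * t ^ 2 <= Rabs C * t ^ 2) by (apply Rmult_le_compat_r; lra).
    assert (Rabs C * t ^ 2 <= Rabs C * t) by (apply Rmult_le_compat_l; lra).
    nra. }
  assert (C' * t <= C' * ((lam - L) / (2 * C'))) by (apply Rmult_le_compat_l; lra).
  replace (C' * ((lam - L) / (2 * C'))) with ((lam - L) / 2) in H1 by (field; lra).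
  lra.
Qed.

Lemma lim_left lam L C r : 0 < r -> 0 <= C -> (forall t, 0 < t < r -> L - C * (r - t) < lam) -> L <= lam.
Proof.
  intros Hr HC H. destruct (Rle_or_lt L lam) as [|Hl]; [assumption|]. exfalso.
  set (d := Rmin (r / 2) ((L - lam) / (2 * (C + 1)))).
  assert (Hd0 : 0 < d) by (unfold d; apply Rmin_glb_lt; [lra| apply Rdiv_lt_0_compat; lra]).
  assert (Hd1 : d <= r / 2) by apply Rmin_l.
  assert (Hd2 : d <= (L - lam) / (2 * (C + 1))) by apply Rmin_r.
  specialize (H (r - d) ltac:(lra)).
  replace (r - (r - d)) with d in H by ring.
  assert (C * d <= (C + 1) * d) by nra.
  assert ((C + 1) * d <= (C + 1) * ((L - lam) / (2 * (C + 1)))) by (apply Rmult_le_compat_l; lra).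
  replace ((C + 1) * ((L - lam) / (2 * (C + 1)))) with ((L - lam) / 2) in H1 by (field; lra).
  lra.
Qed.

Lemma aa_val i : aa i = INR (S i) ^ 2 * PI ^ 2.
Proof. unfold aa. apply Rpow_mult_distr. Qed.

Lemma x_range t i : 0 < t < PI / 2 -> 0 < t ^ 2 / aa i < PI ^ 2 / 4 / aa i /\ PI ^ 2 / 4 / aa i <= 1 / 4.
Proof.
  intros Ht. destruct (aa_ge i) as [_ H9]. pose proof PI_RGT_0.
  assert (Ha : PI ^ 2 <= aa i).
  { rewrite aa_val. assert (1 <= INR (S i) ^ 2) by (apply pow_R1_Rle; apply (le_INR 1); lia).
    assert (0 < PI ^ 2) by (apply pow_lt; lra). nra. }
  assert (Ht2 : t ^ 2 < PI ^ 2 / 4) by (simpl; nra).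
  assert (0 < t ^ 2) by (apply pow_lt; lra).
  repeat split.
  - apply Rdiv_lt_0_compat; lra.
  - unfold Rdiv. apply Rmult_lt_compat_r; [apply Rinv_0_lt_compat; lra| lra].
  - apply Rmult_le_reg_r with (aa i); [lra|]. unfold Rdiv. rewrite Rmult_assoc, Rinv_l by lra. lra.
Qed.

Theorem theorem6_dev (B : nat -> R) (N : nat) (S1 S2 : R) :
  is_bernoulli B ->
  (1 <= N)%nat ->
  infinite_sum (series_term (2 * N - 2)%nat) S1 ->
  infinite_sum (series_term (2 * N)%nat) S2 ->
  (forall t : R, 0 < t < PI / 2 ->
     lambdaN B N * t ^ (2 * N + 2)%nat < Fdiff B N t /\
     Fdiff B N t < muN N S1 S2 * t ^ (2 * N + 2)%nat) /\
  (forall lam : R,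
     (forall t : R, 0 < t < PI / 2 -> lam * t ^ (2 * N + 2)%nat < Fdiff B N t) ->
     lam <= lambdaN B N) /\
  (forall mu : R,
     (forall t : R, 0 < t < PI / 2 -> Fdiff B N t < mu * t ^ (2 * N + 2)%nat) ->
     muN N S1 S2 <= mu).
Proof.
  intros HB HN HS1 HS2.
  destruct N as [|M]; [lia|]. clear HN.
  pose proof PI_RGT_0 as Hpi.
  assert (Haa : forall i, 0 < aa i) by (intros i; destruct (aa_ge i); lra).
  assert (Haap : forall i k, 0 < aa i ^ k) by (intros; apply pow_lt; apply Haa).
  assert (HL : infinite_sum (fun i => 4 * INR (S M) / aa i ^ (M + 2)) (lambdaN B (S M))).
  { unfold lambdaN. rewrite coefB_zeta by exact HB.
    pose proof (inf_sum_scal _ _ (4 * INR (S M)) (zeta_sum (S (S M)) ltac:(lia))) as Z.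
    eapply inf_sum_ext; [|exact Z]. intros i. cbv beta.
    replace (M + 2)%nat with (S (S M)) by lia. unfold Rdiv. ring. }
  assert (HMu : infinite_sum (fun i => 4 * phi M (PI ^ 2 / 4 / aa i) / aa i ^ (M + 2)) (muN (S M) S1 S2)).
  { pose proof (inf_sum_minus _ _ _ _ (inf_sum_scal _ _ (64 * INR (S M) / PI ^ (2 * S M + 2)) HS1)
                                    (inf_sum_scal _ _ (16 * (INR (S M) - 1) / PI ^ (2 * S M + 2)) HS2)) as D.
    unfold muN. eapply inf_sum_ext; [|exact D]. intros i. cbv beta.
    unfold series_term. replace (i + 1)%nat with (S i) by lia.
    replace (2 * S M - 2)%nat with (2 * M)%nat by lia.
    replace (2 * S M)%nat with (2 * M + 2)%nat by lia.
    replace (2 * S M + 2)%nat with (2 * M + 4)%nat by lia.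
    rewrite aa_val. unfold phi. rewrite S_INR.
    set (k := INR (S i)).
    assert (Hk : 1 <= k) by (apply (le_INR 1); lia).
    rewrite !pow_add. rewrite Rpow_mult_distr. rewrite <- !pow_mult.
    replace (2 * (M + 2))%nat with (2 * M + 4)%nat by lia.
    assert (0 < k ^ (2 * M)) by (apply pow_lt; lra).
    assert (0 < PI ^ (2 * M)) by (apply pow_lt; lra).
    assert (4 * k ^ 2 - 1 <> 0) by (simpl; nra).
    assert (1 - PI ^ 2 / 4 / (k ^ 2 * PI ^ 2) <> 0).
    { replace (1 - PI ^ 2 / 4 / (k ^ 2 * PI ^ 2)) with ((4 * k ^ 2 - 1) / (4 * k ^ 2)) by (field; split; lra).
      unfold Rdiv. apply Rmult_integral_contrapositive_currified; [lra|]. apply Rinv_neq_0_compat. simpl. nra. }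
    field. repeat split; try lra; simpl; nra. }
  set (p := (2 * S M + 2)%nat).
  assert (HG : forall t, 0 < t < PI / 2 -> infinite_sum (fun i => 4 * phi M (t ^ 2 / aa i) / aa i ^ (M + 2)) (Fdiff B (S M) t / t ^ p)).
  { intros t Ht. apply Fdiff_series; [exact HB| lra]. }
  assert (Hrel : forall t c, 0 < t -> (c * t ^ p < Fdiff B (S M) t <-> c < Fdiff B (S M) t / t ^ p)
                            /\ (Fdiff B (S M) t < c * t ^ p <-> Fdiff B (S M) t / t ^ p < c)).
  { intros t c Ht. assert (Htp : 0 < t ^ p) by (apply pow_lt; lra).
    split; split; intros H.
    - apply Rmult_lt_reg_r with (t ^ p); [lra|]. unfold Rdiv. rewrite Rmult_assoc, Rinv_l, Rmult_1_r by lra. exact H.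
    - apply Rmult_lt_compat_r with (r := t ^ p) in H; [|lra]. unfold Rdiv in H. rewrite Rmult_assoc, Rinv_l, Rmult_1_r in H by lra. exact H.
    - apply Rmult_lt_reg_r with (t ^ p); [lra|]. unfold Rdiv. rewrite Rmult_assoc, Rinv_l, Rmult_1_r by lra. exact H.
    - apply Rmult_lt_compat_r with (r := t ^ p) in H; [|lra]. unfold Rdiv in H. rewrite Rmult_assoc, Rinv_l, Rmult_1_r in H by lra. exact H. }
  assert (Hz3 := zeta_sum (M + 3) ltac:(lia)).
  assert (Hpow3 : forall i, aa i ^ (M + 3) = aa i ^ (M + 2) * aa i).
  { intros i. replace (M + 3)%nat with (S (M + 2)) by lia. simpl. ring. }
  split; [|split].
  - intros t Ht. split.
    + apply (proj2 (proj1 (Hrel t _ ltac:(lra)))).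
      assert (Hle : forall i, 4 * INR (S M) / aa i ^ (M + 2) <= 4 * phi M (t ^ 2 / aa i) / aa i ^ (M + 2)).
      { intros i. destruct (x_range t i Ht) as [[Hx1 Hx2] Hx3].
        unfold Rdiv. apply Rmult_le_compat_r; [apply Rlt_le, Rinv_0_lt_compat, Haap|].
        apply Rmult_le_compat_l; [lra|]. apply Rlt_le, phi_gt. lra. }
      assert (Hlt : 4 * INR (S M) / aa 0 ^ (M + 2) < 4 * phi M (t ^ 2 / aa 0) / aa 0 ^ (M + 2)).
      { destruct (x_range t 0 Ht) as [[Hx1 Hx2] Hx3].
        unfold Rdiv. apply Rmult_lt_compat_r; [apply Rinv_0_lt_compat, Haap|].
        apply Rmult_lt_compat_l; [lra|]. apply phi_gt. lra. }
      exact (inf_sum_lt _ _ _ _ Hle Hlt HL (HG t Ht)).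
    + apply (proj2 (proj2 (Hrel t _ ltac:(lra)))).
      assert (Hle : forall i, 4 * phi M (t ^ 2 / aa i) / aa i ^ (M + 2) <= 4 * phi M (PI ^ 2 / 4 / aa i) / aa i ^ (M + 2)).
      { intros i. destruct (x_range t i Ht) as [[Hx1 Hx2] Hx3].
        unfold Rdiv. apply Rmult_le_compat_r; [apply Rlt_le, Rinv_0_lt_compat, Haap|].
        apply Rmult_le_compat_l; [lra|]. apply Rlt_le, phi_lt; lra. }
      assert (Hlt : 4 * phi M (t ^ 2 / aa 0) / aa 0 ^ (M + 2) < 4 * phi M (PI ^ 2 / 4 / aa 0) / aa 0 ^ (M + 2)).
      { destruct (x_range t 0 Ht) as [[Hx1 Hx2] Hx3].
        unfold Rdiv. apply Rmult_lt_compat_r; [apply Rinv_0_lt_compat, Haap|].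
        apply Rmult_lt_compat_l; [lra|]. apply phi_lt; lra. }
      exact (inf_sum_lt _ _ _ _ Hle Hlt (HG t Ht) HMu).
  - intros lam Hlam.
    apply (lim_right0 lam (lambdaN B (S M)) (16 * INR (S M) * Zeta (M + 3)) (PI / 2)); [lra|].
    intros t Ht.
    assert (H1 : lam < Fdiff B (S M) t / t ^ p) by (apply (proj1 (proj1 (Hrel t _ ltac:(lra)))); apply Hlam; exact Ht).
    assert (H2 : Fdiff B (S M) t / t ^ p - lambdaN B (S M) <= 16 * INR (S M) * Zeta (M + 3) * t ^ 2).
    { pose proof (inf_sum_minus _ _ _ _ (HG t Ht) HL) as D.
      pose proof (inf_sum_scal _ _ (16 * INR (S M) * t ^ 2) Hz3) as Z.
      replace (16 * INR (S M) * Zeta (M + 3) * t ^ 2) with (16 * INR (S M) * t ^ 2 * Zeta (M + 3)) by ring.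
      refine (inf_sum_le _ _ _ _ _ D Z). intros i.
      destruct (x_range t i Ht) as [[Hx1 Hx2] Hx3].
      pose proof (phi_lin0 M (t ^ 2 / aa i) ltac:(lra)) as Hl.
      cbv beta. rewrite Hpow3.
      specialize (Haa i). specialize (Haap i (M + 2)%nat).
      replace (4 * phi M (t ^ 2 / aa i) / aa i ^ (M + 2) - 4 * INR (S M) / aa i ^ (M + 2))
        with (4 * (phi M (t ^ 2 / aa i) - INR (S M)) / aa i ^ (M + 2)) by (field; lra).
      replace (16 * INR (S M) * t ^ 2 * / (aa i ^ (M + 2) * aa i))
        with (4 * (4 * INR (S M) * (t ^ 2 / aa i)) / aa i ^ (M + 2)) by (field; lra).
      unfold Rdiv. apply Rmult_le_compat_r; [apply Rlt_le, Rinv_0_lt_compat; lra|]. lra. }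
    lra.
  - intros mu Hmu.
    assert (HZ3p : 0 < Zeta (M + 3)) by (apply zeta_pos; lia).
    pose proof (pos_INR (S M)).
    apply (lim_left mu (muN (S M) S1 S2) (32 * INR (S M) * Zeta (M + 3) * PI) (PI / 2)); [lra| |].
    { apply Rmult_le_pos; [|lra]. apply Rmult_le_pos; lra. }
    intros t Ht.
    assert (H1 : Fdiff B (S M) t / t ^ p < mu) by (apply (proj1 (proj2 (Hrel t _ ltac:(lra)))); apply Hmu; exact Ht).
    assert (H2 : muN (S M) S1 S2 - Fdiff B (S M) t / t ^ p <= 32 * INR (S M) * (PI ^ 2 / 4 - t ^ 2) * Zeta (M + 3)).
    { pose proof (inf_sum_minus _ _ _ _ HMu (HG t Ht)) as D.
      pose proof (inf_sum_scal _ _ (32 * INR (S M) * (PI ^ 2 / 4 - t ^ 2)) Hz3) as Z.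
      refine (inf_sum_le _ _ _ _ _ D Z). intros i.
      destruct (x_range t i Ht) as [[Hx1 Hx2] Hx3].
      pose proof (phi_lip M (t ^ 2 / aa i) (PI ^ 2 / 4 / aa i) ltac:(lra) ltac:(lra) ltac:(lra)) as Hl.
      cbv beta. rewrite Hpow3.
      specialize (Haa i). specialize (Haap i (M + 2)%nat).
      replace (4 * phi M (PI ^ 2 / 4 / aa i) / aa i ^ (M + 2) - 4 * phi M (t ^ 2 / aa i) / aa i ^ (M + 2))
        with (4 * (phi M (PI ^ 2 / 4 / aa i) - phi M (t ^ 2 / aa i)) / aa i ^ (M + 2)) by (field; lra).
      replace (32 * INR (S M) * (PI ^ 2 / 4 - t ^ 2) * / (aa i ^ (M + 2) * aa i))
        with (4 * (8 * INR (S M) * (PI ^ 2 / 4 / aa i - t ^ 2 / aa i)) / aa i ^ (M + 2)) by (field; lra).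
      unfold Rdiv. apply Rmult_le_compat_r; [apply Rlt_le, Rinv_0_lt_compat; lra|]. lra. }
    assert (H3 : PI ^ 2 / 4 - t ^ 2 <= PI * (PI / 2 - t)) by (simpl; nra).
    assert (H4 : 32 * INR (S M) * (PI ^ 2 / 4 - t ^ 2) * Zeta (M + 3) <= 32 * INR (S M) * Zeta (M + 3) * PI * (PI / 2 - t)).
    { replace (32 * INR (S M) * Zeta (M + 3) * PI * (PI / 2 - t)) with (32 * INR (S M) * (PI * (PI / 2 - t)) * Zeta (M + 3)) by ring.
      apply Rmult_le_compat_r; [lra|]. apply Rmult_le_compat_l; [lra| exact H3]. }
    lra.
Qed.

Theorem theorem6 (B : nat -> R) (N : nat) (S1 S2 : R) :
  is_bernoulli B ->
  (1 <= N)%nat ->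
  infinite_sum (series_term (2 * N - 2)%nat) S1 ->
  infinite_sum (series_term (2 * N)%nat) S2 ->
  (forall t : R, 0 < t < PI / 2 ->
     lambdaN B N * t ^ (2 * N + 2)%nat < Fdiff B N t /\
     Fdiff B N t < muN N S1 S2 * t ^ (2 * N + 2)%nat) /\
  (forall lam : R,
     (forall t : R, 0 < t < PI / 2 -> lam * t ^ (2 * N + 2)%nat < Fdiff B N t) ->
     lam <= lambdaN B N) /\
  (forall mu : R,
     (forall t : R, 0 < t < PI / 2 -> Fdiff B N t < mu * t ^ (2 * N + 2)%nat) ->
     muN N S1 S2 <= mu).
Proof.
  exact (theorem6_dev B N S1 S2).
Qed.
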